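(* Over all 3-periodics of $\mathcal{E}$, the triangle center $X_{100}^\dagger$ of the focus-inversive triangle moves on the circle with center and radius \[C_{100}^\dagger=\left(-c\left(1+\frac{\rho^2}{b^2}\right),0\right),\qquad R_{100}^\dagger=\rho^2\,\frac{a}{b^2}.\]
   Context: Let $a>b>0$ and let $\mathcal{E}$ be the ellipse $x^2/a^2+y^2/b^2=1$. Set $c=\sqrt{a^2-b^2}$, and let the foci be $f_1=(-c,0)$, $f_2=(c,0)$. A 3-periodic is a triangle $P_1P_2P_3$ with vertices on $\mathcal{E}$ such that at each vertex the normal to $\mathcal{E}$ bisects the angle formed by the two sides meeting at that vertex; these form a one-parameter family (one through every point of $\mathcal{E}$). Fix $\rho>0$; the focus-inversive triangle has vertices $P_i^\dagger=f_1+(\rho/d_{1,i})^2(P_i-f_1)$, $d_{1,i}=|P_i-f_1|$. $X_{100}$ is Kimberling's center $X_{100}$: the anticomplement of the Feuerbach point (the point of the circumcircle with barycentrics $a_s/(b_s-c_s):b_s/(c_s-a_s):c_s/(a_s-b_s)$, where $a_s,b_s,c_s$ are the side lengths). *)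

(* Defs.v *)
From HB Require Import structures.
From mathcomp Require Import all_boot all_order all_algebra.
Set Implicit Arguments. Unset Strict Implicit. Unset Printing Implicit Defensive.
Import Order.TTheory GRing.Theory Num.Theory.
Local Open Scope ring_scope.

Section Geo.
Variable R : rcfType.
Definition pt := (R * R)%type.

Definition padd (P Q : pt) : pt := (P.1 + Q.1, P.2 + Q.2).
Definition psub (P Q : pt) : pt := (P.1 - Q.1, P.2 - Q.2).
Definition pscale (k : R) (P : pt) : pt := (k * P.1, k * P.2).
Definition dot (P Q : pt) : R := P.1 * Q.1 + P.2 * Q.2.
Definition cross (P Q : pt) : R := P.1 * Q.2 - P.2 * Q.1.
Definition dist (P Q : pt) : R := Num.sqrt (dot (psub P Q) (psub P Q)).

Definition on_ellipse (a b : R) (P : pt) : Prop :=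
  P.1 ^+ 2 / a ^+ 2 + P.2 ^+ 2 / b ^+ 2 = 1.

Definition focal_c (a b : R) : R := Num.sqrt (a ^+ 2 - b ^+ 2).
Definition focus1 (a b : R) : pt := (- focal_c a b, 0).

(* At vertex P (with neighbours Q and S), the normal to the ellipse at P,
   direction (P.1/a^2, P.2/b^2), is along the internal angle bisector of the
   angle QPS, whose direction is the sum of the unit vectors from P to Q and
   from P to S. *)
Definition normal_bisects (a b : R) (Q P S : pt) : Prop :=
  let u := pscale (dist Q P)^-1 (psub Q P) in
  let w := pscale (dist S P)^-1 (psub S P) in
  cross (padd u w) (P.1 / a ^+ 2, P.2 / b ^+ 2) = 0.

Definition three_periodic (a b : R) (P1 P2 P3 : pt) : Prop :=
  [/\ on_ellipse a b P1, on_ellipse a b P2, on_ellipse a b P3,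
      [/\ P1 <> P2, P2 <> P3 & P3 <> P1] &
      [/\ normal_bisects a b P3 P1 P2, normal_bisects a b P1 P2 P3
        & normal_bisects a b P2 P3 P1]].

Definition focus_inv (a b rho : R) (P : pt) : pt :=
  let f1 := focus1 a b in
  padd f1 (pscale ((rho / dist P f1) ^+ 2) (psub P f1)).

Definition from_bary (A B C : pt) (u v w : R) : pt :=
  pscale (u + v + w)^-1 (padd (pscale u A) (padd (pscale v B) (pscale w C))).

Definition sideA (A B C : pt) : R := dist B C.
Definition sideB (A B C : pt) : R := dist C A.
Definition sideC (A B C : pt) : R := dist A B.

(* Kimberling's X_100, barycentrics a_s/(b_s-c_s) : b_s/(c_s-a_s) : c_s/(a_s-b_s)
   (meaningful when the side lengths are pairwise distinct). *)
Definition X100 (A B C : pt) : pt :=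
  let sa := sideA A B C in let sb := sideB A B C in let sc := sideC A B C in
  from_bary A B C (sa / (sb - sc)) (sb / (sc - sa)) (sc / (sa - sb)).

End Geo.

(* Main.v *)
Require Import Defs.
From HB Require Import structures.
From mathcomp Require Import all_boot all_order all_algebra.
From mathcomp Require Import ring lra.
Import Order.TTheory GRing.Theory Num.Theory.
Local Open Scope ring_scope.
Set Implicit Arguments. Unset Strict Implicit. Unset Printing Implicit Defensive.
Definition Fh (R : rcfType) (a c U V S P Q : R) : R :=
  (4%:R*V^+8*c^+4*S^+2*P^+3*Q^+3 - 8%:R*V^+8*c^+4*S^+2*P^+4*Q^+2 + 4%:R*V^+8*c^+4*S^+2*P^+5*Q - V^+8*c^+4*S^+4*P^+2*Q^+2 + 2%:R*V^+8*c^+4*S^+4*P^+3*Q - V^+8*c^+4*S^+4*P^+4 + 16%:R*V^+8*a*c^+3*S^+2*P^+3*Q^+3 - 16%:R*V^+8*a*c^+3*S^+2*P^+4*Q^+2 - 4%:R*V^+8*a*c^+3*S^+4*P^+2*Q^+2 + 4%:R*V^+8*a*c^+3*S^+4*P^+3*Q + 24%:R*V^+8*a^+2*c^+2*S^+2*P^+3*Q^+3 - 8%:R*V^+8*a^+2*c^+2*S^+2*P^+5*Q - 6%:R*V^+8*a^+2*c^+2*S^+4*P^+2*Q^+2 + 2%:R*V^+8*a^+2*c^+2*S^+4*P^+4 + 16%:R*V^+8*a^+3*c*S^+2*P^+3*Q^+3 + 16%:R*V^+8*a^+3*c*S^+2*P^+4*Q^+2 - 4%:R*V^+8*a^+3*c*S^+4*P^+2*Q^+2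 - 4%:R*V^+8*a^+3*c*S^+4*P^+3*Q + 4%:R*V^+8*a^+4*S^+2*P^+3*Q^+3 + 8%:R*V^+8*a^+4*S^+2*P^+4*Q^+2 + 4%:R*V^+8*a^+4*S^+2*P^+5*Q - V^+8*a^+4*S^+4*P^+2*Q^+2 - 2%:R*V^+8*a^+4*S^+4*P^+3*Q - V^+8*a^+4*S^+4*P^+4 + 8%:R*U*V^+7*c^+4*S*P^+3*Q^+4 + 8%:R*U*V^+7*c^+4*S*P^+4*Q^+3 - 8%:R*U*V^+7*c^+4*S*P^+5*Q^+2 - 8%:R*U*V^+7*c^+4*S*P^+6*Q - 10%:R*U*V^+7*c^+4*S^+3*P^+2*Q^+3 + 6%:R*U*V^+7*c^+4*S^+3*P^+3*Q^+2 + 2%:R*U*V^+7*c^+4*S^+3*P^+4*Q + 2%:R*U*V^+7*c^+4*S^+3*P^+5 + 2%:R*U*V^+7*c^+4*S^+5*P*Q^+2 - 2%:R*U*V^+7*c^+4*S^+5*P^+2*Q + 32%:R*U*V^+7*a*c^+3*S*P^+3*Q^+4 + 16%:R*U*V^+7*a*c^+3*S*P^+4*Q^+3 + 16%:R*U*V^+7*a*c^+3*S*P^+6*Q - 40%:R*U*V^+7*a*c^+3*S^+3*P^+2*Q^+3 + 12%:R*U*V^+7*a*c^+3*S^+3*P^+3*Q^+2 - 4%:R*U*V^+7*a*c^+3*S^+3*P^+5 + 8%:R*U*V^+7*a*c^+3*S^+5*P*Q^+2 - 4%:R*U*V^+7*a*c^+3*S^+5*P^+2*Q + 48%:R*U*V^+7*a^+2*c^+2*S*P^+3*Q^+4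 + 16%:R*U*V^+7*a^+2*c^+2*S*P^+5*Q^+2 - 60%:R*U*V^+7*a^+2*c^+2*S^+3*P^+2*Q^+3 - 4%:R*U*V^+7*a^+2*c^+2*S^+3*P^+4*Q + 12%:R*U*V^+7*a^+2*c^+2*S^+5*P*Q^+2 + 32%:R*U*V^+7*a^+3*c*S*P^+3*Q^+4 - 16%:R*U*V^+7*a^+3*c*S*P^+4*Q^+3 - 16%:R*U*V^+7*a^+3*c*S*P^+6*Q - 40%:R*U*V^+7*a^+3*c*S^+3*P^+2*Q^+3 - 12%:R*U*V^+7*a^+3*c*S^+3*P^+3*Q^+2 + 4%:R*U*V^+7*a^+3*c*S^+3*P^+5 + 8%:R*U*V^+7*a^+3*c*S^+5*P*Q^+2 + 4%:R*U*V^+7*a^+3*c*S^+5*P^+2*Q + 8%:R*U*V^+7*a^+4*S*P^+3*Q^+4 - 8%:R*U*V^+7*a^+4*S*P^+4*Q^+3 - 8%:R*U*V^+7*a^+4*S*P^+5*Q^+2 + 8%:R*U*V^+7*a^+4*S*P^+6*Q - 10%:R*U*V^+7*a^+4*S^+3*P^+2*Q^+3 - 6%:R*U*V^+7*a^+4*S^+3*P^+3*Q^+2 + 2%:R*U*V^+7*a^+4*S^+3*P^+4*Q - 2%:R*U*V^+7*a^+4*S^+3*P^+5 + 2%:R*U*V^+7*a^+4*S^+5*P*Q^+2 + 2%:R*U*V^+7*a^+4*S^+5*P^+2*Q + 4%:R*U^+2*V^+6*c^+4*P^+3*Q^+5 + 16%:R*U^+2*V^+6*c^+4*P^+4*Q^+4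 + 24%:R*U^+2*V^+6*c^+4*P^+5*Q^+3 + 16%:R*U^+2*V^+6*c^+4*P^+6*Q^+2 + 4%:R*U^+2*V^+6*c^+4*P^+7*Q - 9%:R*U^+2*V^+6*c^+4*S^+2*P^+2*Q^+4 - 52%:R*U^+2*V^+6*c^+4*S^+2*P^+3*Q^+3 + 18%:R*U^+2*V^+6*c^+4*S^+2*P^+4*Q^+2 - 4%:R*U^+2*V^+6*c^+4*S^+2*P^+5*Q - U^+2*V^+6*c^+4*S^+2*P^+6 + 6%:R*U^+2*V^+6*c^+4*S^+4*P*Q^+3 + 20%:R*U^+2*V^+6*c^+4*S^+4*P^+2*Q^+2 - 14%:R*U^+2*V^+6*c^+4*S^+4*P^+3*Q - U^+2*V^+6*c^+4*S^+6*Q^+2 - 2%:R*U^+2*V^+6*c^+4*S^+6*P*Q + 2%:R*U^+2*V^+6*c^+4*S^+6*P^+2 + 16%:R*U^+2*V^+6*a*c^+3*P^+3*Q^+5 + 32%:R*U^+2*V^+6*a*c^+3*P^+4*Q^+4 - 32%:R*U^+2*V^+6*a*c^+3*P^+6*Q^+2 - 16%:R*U^+2*V^+6*a*c^+3*P^+7*Q - 36%:R*U^+2*V^+6*a*c^+3*S^+2*P^+2*Q^+4 - (1%:R*100%:R+4%:R)*U^+2*V^+6*a*c^+3*S^+2*P^+3*Q^+3 + 8%:R*U^+2*V^+6*a*c^+3*S^+2*P^+5*Q + 4%:R*U^+2*V^+6*a*c^+3*S^+2*P^+6 + 24%:R*U^+2*V^+6*a*c^+3*S^+4*P*Q^+3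 + 40%:R*U^+2*V^+6*a*c^+3*S^+4*P^+2*Q^+2 - 4%:R*U^+2*V^+6*a*c^+3*S^+6*Q^+2 - 4%:R*U^+2*V^+6*a*c^+3*S^+6*P*Q + 24%:R*U^+2*V^+6*a^+2*c^+2*P^+3*Q^+5 - 48%:R*U^+2*V^+6*a^+2*c^+2*P^+5*Q^+3 + 24%:R*U^+2*V^+6*a^+2*c^+2*P^+7*Q - 54%:R*U^+2*V^+6*a^+2*c^+2*S^+2*P^+2*Q^+4 - 36%:R*U^+2*V^+6*a^+2*c^+2*S^+2*P^+4*Q^+2 - 6%:R*U^+2*V^+6*a^+2*c^+2*S^+2*P^+6 + 36%:R*U^+2*V^+6*a^+2*c^+2*S^+4*P*Q^+3 + 28%:R*U^+2*V^+6*a^+2*c^+2*S^+4*P^+3*Q - 6%:R*U^+2*V^+6*a^+2*c^+2*S^+6*Q^+2 - 4%:R*U^+2*V^+6*a^+2*c^+2*S^+6*P^+2 + 16%:R*U^+2*V^+6*a^+3*c*P^+3*Q^+5 - 32%:R*U^+2*V^+6*a^+3*c*P^+4*Q^+4 + 32%:R*U^+2*V^+6*a^+3*c*P^+6*Q^+2 - 16%:R*U^+2*V^+6*a^+3*c*P^+7*Q - 36%:R*U^+2*V^+6*a^+3*c*S^+2*P^+2*Q^+4 + (1%:R*100%:R+4%:R)*U^+2*V^+6*a^+3*c*S^+2*P^+3*Q^+3 - 8%:R*U^+2*V^+6*a^+3*c*S^+2*P^+5*Q + 4%:R*U^+2*V^+6*a^+3*c*S^+2*P^+6 + 24%:R*U^+2*V^+6*a^+3*c*S^+4*P*Q^+3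 - 40%:R*U^+2*V^+6*a^+3*c*S^+4*P^+2*Q^+2 - 4%:R*U^+2*V^+6*a^+3*c*S^+6*Q^+2 + 4%:R*U^+2*V^+6*a^+3*c*S^+6*P*Q + 4%:R*U^+2*V^+6*a^+4*P^+3*Q^+5 - 16%:R*U^+2*V^+6*a^+4*P^+4*Q^+4 + 24%:R*U^+2*V^+6*a^+4*P^+5*Q^+3 - 16%:R*U^+2*V^+6*a^+4*P^+6*Q^+2 + 4%:R*U^+2*V^+6*a^+4*P^+7*Q - 9%:R*U^+2*V^+6*a^+4*S^+2*P^+2*Q^+4 + 52%:R*U^+2*V^+6*a^+4*S^+2*P^+3*Q^+3 + 18%:R*U^+2*V^+6*a^+4*S^+2*P^+4*Q^+2 + 4%:R*U^+2*V^+6*a^+4*S^+2*P^+5*Q - U^+2*V^+6*a^+4*S^+2*P^+6 + 6%:R*U^+2*V^+6*a^+4*S^+4*P*Q^+3 - 20%:R*U^+2*V^+6*a^+4*S^+4*P^+2*Q^+2 - 14%:R*U^+2*V^+6*a^+4*S^+4*P^+3*Q - U^+2*V^+6*a^+4*S^+6*Q^+2 + 2%:R*U^+2*V^+6*a^+4*S^+6*P*Q + 2%:R*U^+2*V^+6*a^+4*S^+6*P^+2 + 8%:R*U^+3*V^+5*c^+4*S*P^+2*Q^+5 - 24%:R*U^+3*V^+5*c^+4*S*P^+3*Q^+4 - 72%:R*U^+3*V^+5*c^+4*S*P^+4*Q^+3 - 40%:R*U^+3*V^+5*c^+4*S*P^+5*Q^+2 - 2%:R*U^+3*V^+5*c^+4*S^+3*P*Q^+4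 + 46%:R*U^+3*V^+5*c^+4*S^+3*P^+2*Q^+3 + 26%:R*U^+3*V^+5*c^+4*S^+3*P^+3*Q^+2 + 26%:R*U^+3*V^+5*c^+4*S^+3*P^+4*Q - 18%:R*U^+3*V^+5*c^+4*S^+5*P*Q^+2 - 2%:R*U^+3*V^+5*c^+4*S^+5*P^+2*Q - 4%:R*U^+3*V^+5*c^+4*S^+5*P^+3 + 2%:R*U^+3*V^+5*c^+4*S^+7*Q + 32%:R*U^+3*V^+5*a*c^+3*S*P^+2*Q^+5 - 48%:R*U^+3*V^+5*a*c^+3*S*P^+3*Q^+4 + 80%:R*U^+3*V^+5*a*c^+3*S*P^+5*Q^+2 - 8%:R*U^+3*V^+5*a*c^+3*S^+3*P*Q^+4 + 92%:R*U^+3*V^+5*a*c^+3*S^+3*P^+2*Q^+3 - 52%:R*U^+3*V^+5*a*c^+3*S^+3*P^+4*Q - 36%:R*U^+3*V^+5*a*c^+3*S^+5*P*Q^+2 + 8%:R*U^+3*V^+5*a*c^+3*S^+5*P^+3 + 4%:R*U^+3*V^+5*a*c^+3*S^+7*Q + 48%:R*U^+3*V^+5*a^+2*c^+2*S*P^+2*Q^+5 + (1%:R*100%:R+44%:R)*U^+3*V^+5*a^+2*c^+2*S*P^+4*Q^+3 - 12%:R*U^+3*V^+5*a^+2*c^+2*S^+3*P*Q^+4 - 52%:R*U^+3*V^+5*a^+2*c^+2*S^+3*P^+3*Q^+2 + 4%:R*U^+3*V^+5*a^+2*c^+2*S^+5*P^+2*Q + 32%:R*U^+3*V^+5*a^+3*c*S*P^+2*Q^+5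 + 48%:R*U^+3*V^+5*a^+3*c*S*P^+3*Q^+4 - 80%:R*U^+3*V^+5*a^+3*c*S*P^+5*Q^+2 - 8%:R*U^+3*V^+5*a^+3*c*S^+3*P*Q^+4 - 92%:R*U^+3*V^+5*a^+3*c*S^+3*P^+2*Q^+3 + 52%:R*U^+3*V^+5*a^+3*c*S^+3*P^+4*Q + 36%:R*U^+3*V^+5*a^+3*c*S^+5*P*Q^+2 - 8%:R*U^+3*V^+5*a^+3*c*S^+5*P^+3 - 4%:R*U^+3*V^+5*a^+3*c*S^+7*Q + 8%:R*U^+3*V^+5*a^+4*S*P^+2*Q^+5 + 24%:R*U^+3*V^+5*a^+4*S*P^+3*Q^+4 - 72%:R*U^+3*V^+5*a^+4*S*P^+4*Q^+3 + 40%:R*U^+3*V^+5*a^+4*S*P^+5*Q^+2 - 2%:R*U^+3*V^+5*a^+4*S^+3*P*Q^+4 - 46%:R*U^+3*V^+5*a^+4*S^+3*P^+2*Q^+3 + 26%:R*U^+3*V^+5*a^+4*S^+3*P^+3*Q^+2 - 26%:R*U^+3*V^+5*a^+4*S^+3*P^+4*Q + 18%:R*U^+3*V^+5*a^+4*S^+5*P*Q^+2 - 2%:R*U^+3*V^+5*a^+4*S^+5*P^+2*Q + 4%:R*U^+3*V^+5*a^+4*S^+5*P^+3 - 2%:R*U^+3*V^+5*a^+4*S^+7*Q + 8%:R*U^+4*V^+4*c^+4*P^+2*Q^+6 + 32%:R*U^+4*V^+4*c^+4*P^+3*Q^+5 + 48%:R*U^+4*V^+4*c^+4*P^+4*Q^+4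 + 32%:R*U^+4*V^+4*c^+4*P^+5*Q^+3 + 8%:R*U^+4*V^+4*c^+4*P^+6*Q^+2 - 10%:R*U^+4*V^+4*c^+4*S^+2*P*Q^+5 - 32%:R*U^+4*V^+4*c^+4*S^+2*P^+2*Q^+4 + 52%:R*U^+4*V^+4*c^+4*S^+2*P^+3*Q^+3 - 32%:R*U^+4*V^+4*c^+4*S^+2*P^+4*Q^+2 - 10%:R*U^+4*V^+4*c^+4*S^+2*P^+5*Q + 2%:R*U^+4*V^+4*c^+4*S^+4*Q^+4 + 6%:R*U^+4*V^+4*c^+4*S^+4*P*Q^+3 - 40%:R*U^+4*V^+4*c^+4*S^+4*P^+2*Q^+2 + 6%:R*U^+4*V^+4*c^+4*S^+4*P^+3*Q + 2%:R*U^+4*V^+4*c^+4*S^+4*P^+4 + 10%:R*U^+4*V^+4*c^+4*S^+6*P*Q - U^+4*V^+4*c^+4*S^+8 + 32%:R*U^+4*V^+4*a*c^+3*P^+2*Q^+6 + 64%:R*U^+4*V^+4*a*c^+3*P^+3*Q^+5 - 64%:R*U^+4*V^+4*a*c^+3*P^+5*Q^+3 - 32%:R*U^+4*V^+4*a*c^+3*P^+6*Q^+2 - 40%:R*U^+4*V^+4*a*c^+3*S^+2*P*Q^+5 - 64%:R*U^+4*V^+4*a*c^+3*S^+2*P^+2*Q^+4 + 64%:R*U^+4*V^+4*a*c^+3*S^+2*P^+4*Q^+2 + 40%:R*U^+4*V^+4*a*c^+3*S^+2*P^+5*Q + 8%:R*U^+4*V^+4*a*c^+3*S^+4*Q^+4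 + 12%:R*U^+4*V^+4*a*c^+3*S^+4*P*Q^+3 - 12%:R*U^+4*V^+4*a*c^+3*S^+4*P^+3*Q - 8%:R*U^+4*V^+4*a*c^+3*S^+4*P^+4 + 48%:R*U^+4*V^+4*a^+2*c^+2*P^+2*Q^+6 - 96%:R*U^+4*V^+4*a^+2*c^+2*P^+4*Q^+4 + 48%:R*U^+4*V^+4*a^+2*c^+2*P^+6*Q^+2 - 60%:R*U^+4*V^+4*a^+2*c^+2*S^+2*P*Q^+5 - (1%:R*100%:R+4%:R)*U^+4*V^+4*a^+2*c^+2*S^+2*P^+3*Q^+3 - 60%:R*U^+4*V^+4*a^+2*c^+2*S^+2*P^+5*Q + 12%:R*U^+4*V^+4*a^+2*c^+2*S^+4*Q^+4 + 80%:R*U^+4*V^+4*a^+2*c^+2*S^+4*P^+2*Q^+2 + 12%:R*U^+4*V^+4*a^+2*c^+2*S^+4*P^+4 - 20%:R*U^+4*V^+4*a^+2*c^+2*S^+6*P*Q + 2%:R*U^+4*V^+4*a^+2*c^+2*S^+8 + 32%:R*U^+4*V^+4*a^+3*c*P^+2*Q^+6 - 64%:R*U^+4*V^+4*a^+3*c*P^+3*Q^+5 + 64%:R*U^+4*V^+4*a^+3*c*P^+5*Q^+3 - 32%:R*U^+4*V^+4*a^+3*c*P^+6*Q^+2 - 40%:R*U^+4*V^+4*a^+3*c*S^+2*P*Q^+5 + 64%:R*U^+4*V^+4*a^+3*c*S^+2*P^+2*Q^+4 - 64%:R*U^+4*V^+4*a^+3*c*S^+2*P^+4*Q^+2 + 40%:R*U^+4*V^+4*a^+3*c*S^+2*P^+5*Q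 + 8%:R*U^+4*V^+4*a^+3*c*S^+4*Q^+4 - 12%:R*U^+4*V^+4*a^+3*c*S^+4*P*Q^+3 + 12%:R*U^+4*V^+4*a^+3*c*S^+4*P^+3*Q - 8%:R*U^+4*V^+4*a^+3*c*S^+4*P^+4 + 8%:R*U^+4*V^+4*a^+4*P^+2*Q^+6 - 32%:R*U^+4*V^+4*a^+4*P^+3*Q^+5 + 48%:R*U^+4*V^+4*a^+4*P^+4*Q^+4 - 32%:R*U^+4*V^+4*a^+4*P^+5*Q^+3 + 8%:R*U^+4*V^+4*a^+4*P^+6*Q^+2 - 10%:R*U^+4*V^+4*a^+4*S^+2*P*Q^+5 + 32%:R*U^+4*V^+4*a^+4*S^+2*P^+2*Q^+4 + 52%:R*U^+4*V^+4*a^+4*S^+2*P^+3*Q^+3 + 32%:R*U^+4*V^+4*a^+4*S^+2*P^+4*Q^+2 - 10%:R*U^+4*V^+4*a^+4*S^+2*P^+5*Q + 2%:R*U^+4*V^+4*a^+4*S^+4*Q^+4 - 6%:R*U^+4*V^+4*a^+4*S^+4*P*Q^+3 - 40%:R*U^+4*V^+4*a^+4*S^+4*P^+2*Q^+2 - 6%:R*U^+4*V^+4*a^+4*S^+4*P^+3*Q + 2%:R*U^+4*V^+4*a^+4*S^+4*P^+4 + 10%:R*U^+4*V^+4*a^+4*S^+6*P*Q - U^+4*V^+4*a^+4*S^+8 - 40%:R*U^+5*V^+3*c^+4*S*P^+2*Q^+5 - 72%:R*U^+5*V^+3*c^+4*S*P^+3*Q^+4 - 24%:R*U^+5*V^+3*c^+4*S*P^+4*Q^+3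 + 8%:R*U^+5*V^+3*c^+4*S*P^+5*Q^+2 + 26%:R*U^+5*V^+3*c^+4*S^+3*P*Q^+4 + 26%:R*U^+5*V^+3*c^+4*S^+3*P^+2*Q^+3 + 46%:R*U^+5*V^+3*c^+4*S^+3*P^+3*Q^+2 - 2%:R*U^+5*V^+3*c^+4*S^+3*P^+4*Q - 4%:R*U^+5*V^+3*c^+4*S^+5*Q^+3 - 2%:R*U^+5*V^+3*c^+4*S^+5*P*Q^+2 - 18%:R*U^+5*V^+3*c^+4*S^+5*P^+2*Q + 2%:R*U^+5*V^+3*c^+4*S^+7*P - 80%:R*U^+5*V^+3*a*c^+3*S*P^+2*Q^+5 + 48%:R*U^+5*V^+3*a*c^+3*S*P^+4*Q^+3 - 32%:R*U^+5*V^+3*a*c^+3*S*P^+5*Q^+2 + 52%:R*U^+5*V^+3*a*c^+3*S^+3*P*Q^+4 - 92%:R*U^+5*V^+3*a*c^+3*S^+3*P^+3*Q^+2 + 8%:R*U^+5*V^+3*a*c^+3*S^+3*P^+4*Q - 8%:R*U^+5*V^+3*a*c^+3*S^+5*Q^+3 + 36%:R*U^+5*V^+3*a*c^+3*S^+5*P^+2*Q - 4%:R*U^+5*V^+3*a*c^+3*S^+7*P + (1%:R*100%:R+44%:R)*U^+5*V^+3*a^+2*c^+2*S*P^+3*Q^+4 + 48%:R*U^+5*V^+3*a^+2*c^+2*S*P^+5*Q^+2 - 52%:R*U^+5*V^+3*a^+2*c^+2*S^+3*P^+2*Q^+3 - 12%:R*U^+5*V^+3*a^+2*c^+2*S^+3*P^+4*Q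 + 4%:R*U^+5*V^+3*a^+2*c^+2*S^+5*P*Q^+2 + 80%:R*U^+5*V^+3*a^+3*c*S*P^+2*Q^+5 - 48%:R*U^+5*V^+3*a^+3*c*S*P^+4*Q^+3 - 32%:R*U^+5*V^+3*a^+3*c*S*P^+5*Q^+2 - 52%:R*U^+5*V^+3*a^+3*c*S^+3*P*Q^+4 + 92%:R*U^+5*V^+3*a^+3*c*S^+3*P^+3*Q^+2 + 8%:R*U^+5*V^+3*a^+3*c*S^+3*P^+4*Q + 8%:R*U^+5*V^+3*a^+3*c*S^+5*Q^+3 - 36%:R*U^+5*V^+3*a^+3*c*S^+5*P^+2*Q + 4%:R*U^+5*V^+3*a^+3*c*S^+7*P + 40%:R*U^+5*V^+3*a^+4*S*P^+2*Q^+5 - 72%:R*U^+5*V^+3*a^+4*S*P^+3*Q^+4 + 24%:R*U^+5*V^+3*a^+4*S*P^+4*Q^+3 + 8%:R*U^+5*V^+3*a^+4*S*P^+5*Q^+2 - 26%:R*U^+5*V^+3*a^+4*S^+3*P*Q^+4 + 26%:R*U^+5*V^+3*a^+4*S^+3*P^+2*Q^+3 - 46%:R*U^+5*V^+3*a^+4*S^+3*P^+3*Q^+2 - 2%:R*U^+5*V^+3*a^+4*S^+3*P^+4*Q + 4%:R*U^+5*V^+3*a^+4*S^+5*Q^+3 - 2%:R*U^+5*V^+3*a^+4*S^+5*P*Q^+2 + 18%:R*U^+5*V^+3*a^+4*S^+5*P^+2*Q - 2%:R*U^+5*V^+3*a^+4*S^+7*P + 4%:R*U^+6*V^+2*c^+4*P*Q^+7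 + 16%:R*U^+6*V^+2*c^+4*P^+2*Q^+6 + 24%:R*U^+6*V^+2*c^+4*P^+3*Q^+5 + 16%:R*U^+6*V^+2*c^+4*P^+4*Q^+4 + 4%:R*U^+6*V^+2*c^+4*P^+5*Q^+3 - U^+6*V^+2*c^+4*S^+2*Q^+6 - 4%:R*U^+6*V^+2*c^+4*S^+2*P*Q^+5 + 18%:R*U^+6*V^+2*c^+4*S^+2*P^+2*Q^+4 - 52%:R*U^+6*V^+2*c^+4*S^+2*P^+3*Q^+3 - 9%:R*U^+6*V^+2*c^+4*S^+2*P^+4*Q^+2 - 14%:R*U^+6*V^+2*c^+4*S^+4*P*Q^+3 + 20%:R*U^+6*V^+2*c^+4*S^+4*P^+2*Q^+2 + 6%:R*U^+6*V^+2*c^+4*S^+4*P^+3*Q + 2%:R*U^+6*V^+2*c^+4*S^+6*Q^+2 - 2%:R*U^+6*V^+2*c^+4*S^+6*P*Q - U^+6*V^+2*c^+4*S^+6*P^+2 + 16%:R*U^+6*V^+2*a*c^+3*P*Q^+7 + 32%:R*U^+6*V^+2*a*c^+3*P^+2*Q^+6 - 32%:R*U^+6*V^+2*a*c^+3*P^+4*Q^+4 - 16%:R*U^+6*V^+2*a*c^+3*P^+5*Q^+3 - 4%:R*U^+6*V^+2*a*c^+3*S^+2*Q^+6 - 8%:R*U^+6*V^+2*a*c^+3*S^+2*P*Q^+5 + (1%:R*100%:R+4%:R)*U^+6*V^+2*a*c^+3*S^+2*P^+3*Q^+3 + 36%:R*U^+6*V^+2*a*c^+3*S^+2*P^+4*Q^+2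 - 40%:R*U^+6*V^+2*a*c^+3*S^+4*P^+2*Q^+2 - 24%:R*U^+6*V^+2*a*c^+3*S^+4*P^+3*Q + 4%:R*U^+6*V^+2*a*c^+3*S^+6*P*Q + 4%:R*U^+6*V^+2*a*c^+3*S^+6*P^+2 + 24%:R*U^+6*V^+2*a^+2*c^+2*P*Q^+7 - 48%:R*U^+6*V^+2*a^+2*c^+2*P^+3*Q^+5 + 24%:R*U^+6*V^+2*a^+2*c^+2*P^+5*Q^+3 - 6%:R*U^+6*V^+2*a^+2*c^+2*S^+2*Q^+6 - 36%:R*U^+6*V^+2*a^+2*c^+2*S^+2*P^+2*Q^+4 - 54%:R*U^+6*V^+2*a^+2*c^+2*S^+2*P^+4*Q^+2 + 28%:R*U^+6*V^+2*a^+2*c^+2*S^+4*P*Q^+3 + 36%:R*U^+6*V^+2*a^+2*c^+2*S^+4*P^+3*Q - 4%:R*U^+6*V^+2*a^+2*c^+2*S^+6*Q^+2 - 6%:R*U^+6*V^+2*a^+2*c^+2*S^+6*P^+2 + 16%:R*U^+6*V^+2*a^+3*c*P*Q^+7 - 32%:R*U^+6*V^+2*a^+3*c*P^+2*Q^+6 + 32%:R*U^+6*V^+2*a^+3*c*P^+4*Q^+4 - 16%:R*U^+6*V^+2*a^+3*c*P^+5*Q^+3 - 4%:R*U^+6*V^+2*a^+3*c*S^+2*Q^+6 + 8%:R*U^+6*V^+2*a^+3*c*S^+2*P*Q^+5 - (1%:R*100%:R+4%:R)*U^+6*V^+2*a^+3*c*S^+2*P^+3*Q^+3 + 36%:R*U^+6*V^+2*a^+3*c*S^+2*P^+4*Q^+2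 + 40%:R*U^+6*V^+2*a^+3*c*S^+4*P^+2*Q^+2 - 24%:R*U^+6*V^+2*a^+3*c*S^+4*P^+3*Q - 4%:R*U^+6*V^+2*a^+3*c*S^+6*P*Q + 4%:R*U^+6*V^+2*a^+3*c*S^+6*P^+2 + 4%:R*U^+6*V^+2*a^+4*P*Q^+7 - 16%:R*U^+6*V^+2*a^+4*P^+2*Q^+6 + 24%:R*U^+6*V^+2*a^+4*P^+3*Q^+5 - 16%:R*U^+6*V^+2*a^+4*P^+4*Q^+4 + 4%:R*U^+6*V^+2*a^+4*P^+5*Q^+3 - U^+6*V^+2*a^+4*S^+2*Q^+6 + 4%:R*U^+6*V^+2*a^+4*S^+2*P*Q^+5 + 18%:R*U^+6*V^+2*a^+4*S^+2*P^+2*Q^+4 + 52%:R*U^+6*V^+2*a^+4*S^+2*P^+3*Q^+3 - 9%:R*U^+6*V^+2*a^+4*S^+2*P^+4*Q^+2 - 14%:R*U^+6*V^+2*a^+4*S^+4*P*Q^+3 - 20%:R*U^+6*V^+2*a^+4*S^+4*P^+2*Q^+2 + 6%:R*U^+6*V^+2*a^+4*S^+4*P^+3*Q + 2%:R*U^+6*V^+2*a^+4*S^+6*Q^+2 + 2%:R*U^+6*V^+2*a^+4*S^+6*P*Q - U^+6*V^+2*a^+4*S^+6*P^+2 - 8%:R*U^+7*V*c^+4*S*P*Q^+6 - 8%:R*U^+7*V*c^+4*S*P^+2*Q^+5 + 8%:R*U^+7*V*c^+4*S*P^+3*Q^+4 + 8%:R*U^+7*V*c^+4*S*P^+4*Q^+3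 + 2%:R*U^+7*V*c^+4*S^+3*Q^+5 + 2%:R*U^+7*V*c^+4*S^+3*P*Q^+4 + 6%:R*U^+7*V*c^+4*S^+3*P^+2*Q^+3 - 10%:R*U^+7*V*c^+4*S^+3*P^+3*Q^+2 - 2%:R*U^+7*V*c^+4*S^+5*P*Q^+2 + 2%:R*U^+7*V*c^+4*S^+5*P^+2*Q - 16%:R*U^+7*V*a*c^+3*S*P*Q^+6 - 16%:R*U^+7*V*a*c^+3*S*P^+3*Q^+4 - 32%:R*U^+7*V*a*c^+3*S*P^+4*Q^+3 + 4%:R*U^+7*V*a*c^+3*S^+3*Q^+5 - 12%:R*U^+7*V*a*c^+3*S^+3*P^+2*Q^+3 + 40%:R*U^+7*V*a*c^+3*S^+3*P^+3*Q^+2 + 4%:R*U^+7*V*a*c^+3*S^+5*P*Q^+2 - 8%:R*U^+7*V*a*c^+3*S^+5*P^+2*Q + 16%:R*U^+7*V*a^+2*c^+2*S*P^+2*Q^+5 + 48%:R*U^+7*V*a^+2*c^+2*S*P^+4*Q^+3 - 4%:R*U^+7*V*a^+2*c^+2*S^+3*P*Q^+4 - 60%:R*U^+7*V*a^+2*c^+2*S^+3*P^+3*Q^+2 + 12%:R*U^+7*V*a^+2*c^+2*S^+5*P^+2*Q + 16%:R*U^+7*V*a^+3*c*S*P*Q^+6 + 16%:R*U^+7*V*a^+3*c*S*P^+3*Q^+4 - 32%:R*U^+7*V*a^+3*c*S*P^+4*Q^+3 - 4%:R*U^+7*V*a^+3*c*S^+3*Q^+5 + 12%:R*U^+7*V*a^+3*c*S^+3*P^+2*Q^+3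 + 40%:R*U^+7*V*a^+3*c*S^+3*P^+3*Q^+2 - 4%:R*U^+7*V*a^+3*c*S^+5*P*Q^+2 - 8%:R*U^+7*V*a^+3*c*S^+5*P^+2*Q + 8%:R*U^+7*V*a^+4*S*P*Q^+6 - 8%:R*U^+7*V*a^+4*S*P^+2*Q^+5 - 8%:R*U^+7*V*a^+4*S*P^+3*Q^+4 + 8%:R*U^+7*V*a^+4*S*P^+4*Q^+3 - 2%:R*U^+7*V*a^+4*S^+3*Q^+5 + 2%:R*U^+7*V*a^+4*S^+3*P*Q^+4 - 6%:R*U^+7*V*a^+4*S^+3*P^+2*Q^+3 - 10%:R*U^+7*V*a^+4*S^+3*P^+3*Q^+2 + 2%:R*U^+7*V*a^+4*S^+5*P*Q^+2 + 2%:R*U^+7*V*a^+4*S^+5*P^+2*Q + 4%:R*U^+8*c^+4*S^+2*P*Q^+5 - 8%:R*U^+8*c^+4*S^+2*P^+2*Q^+4 + 4%:R*U^+8*c^+4*S^+2*P^+3*Q^+3 - U^+8*c^+4*S^+4*Q^+4 + 2%:R*U^+8*c^+4*S^+4*P*Q^+3 - U^+8*c^+4*S^+4*P^+2*Q^+2 + 16%:R*U^+8*a*c^+3*S^+2*P^+2*Q^+4 - 16%:R*U^+8*a*c^+3*S^+2*P^+3*Q^+3 - 4%:R*U^+8*a*c^+3*S^+4*P*Q^+3 + 4%:R*U^+8*a*c^+3*S^+4*P^+2*Q^+2 - 8%:R*U^+8*a^+2*c^+2*S^+2*P*Q^+5 + 24%:R*U^+8*a^+2*c^+2*S^+2*P^+3*Q^+3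 + 2%:R*U^+8*a^+2*c^+2*S^+4*Q^+4 - 6%:R*U^+8*a^+2*c^+2*S^+4*P^+2*Q^+2 - 16%:R*U^+8*a^+3*c*S^+2*P^+2*Q^+4 - 16%:R*U^+8*a^+3*c*S^+2*P^+3*Q^+3 + 4%:R*U^+8*a^+3*c*S^+4*P*Q^+3 + 4%:R*U^+8*a^+3*c*S^+4*P^+2*Q^+2 + 4%:R*U^+8*a^+4*S^+2*P*Q^+5 + 8%:R*U^+8*a^+4*S^+2*P^+2*Q^+4 + 4%:R*U^+8*a^+4*S^+2*P^+3*Q^+3 - U^+8*a^+4*S^+4*Q^+4 - 2%:R*U^+8*a^+4*S^+4*P*Q^+3 - U^+8*a^+4*S^+4*P^+2*Q^+2).

Definition Zp (R : rcfType) (a c U V K : R) : R :=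
  (12%:R*U^+2*V^+22*K^+3*c^+26 + 48%:R*U^+2*V^+22*K^+3*a*c^+25 + 36%:R*U^+2*V^+22*K^+3*a^+2*c^+24 - 96%:R*U^+2*V^+22*K^+3*a^+3*c^+23 - (1%:R*100%:R+68%:R)*U^+2*V^+22*K^+3*a^+4*c^+22 + (1%:R*100%:R+68%:R)*U^+2*V^+22*K^+3*a^+6*c^+20 + 96%:R*U^+2*V^+22*K^+3*a^+7*c^+19 - 36%:R*U^+2*V^+22*K^+3*a^+8*c^+18 - 48%:R*U^+2*V^+22*K^+3*a^+9*c^+17 - 12%:R*U^+2*V^+22*K^+3*a^+10*c^+16 + 8%:R*U^+2*V^+22*K^+4*c^+28 + 32%:R*U^+2*V^+22*K^+4*a*c^+27 - 4%:R*U^+2*V^+22*K^+4*a^+2*c^+26 - (1%:R*100%:R+76%:R)*U^+2*V^+22*K^+4*a^+3*c^+25 - (1%:R*100%:R+96%:R)*U^+2*V^+22*K^+4*a^+4*c^+24 + (2%:R*100%:R+24%:R)*U^+2*V^+22*K^+4*a^+5*c^+23 + (5%:R*100%:R+4%:R)*U^+2*V^+22*K^+4*a^+6*c^+22 + 64%:R*U^+2*V^+22*K^+4*a^+7*c^+21 - (4%:R*100%:R+16%:R)*U^+2*V^+22*K^+4*a^+8*c^+20 - (2%:R*100%:R+56%:R)*U^+2*V^+22*K^+4*a^+9*c^+19 + 76%:R*U^+2*V^+22*K^+4*a^+10*c^+18 + (1%:R*100%:R+12%:R)*U^+2*V^+22*K^+4*a^+11*c^+17 + 28%:R*U^+2*V^+22*K^+4*a^+12*c^+16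 - 4%:R*U^+2*V^+22*K^+5*c^+30 - 16%:R*U^+2*V^+22*K^+5*a*c^+29 - 20%:R*U^+2*V^+22*K^+5*a^+2*c^+28 + 48%:R*U^+2*V^+22*K^+5*a^+4*c^+26 + (1%:R*100%:R+28%:R)*U^+2*V^+22*K^+5*a^+5*c^+25 + (1%:R*100%:R+4%:R)*U^+2*V^+22*K^+5*a^+6*c^+24 - (1%:R*100%:R+60%:R)*U^+2*V^+22*K^+5*a^+7*c^+23 - (3%:R*100%:R+24%:R)*U^+2*V^+22*K^+5*a^+8*c^+22 - 48%:R*U^+2*V^+22*K^+5*a^+9*c^+21 + (2%:R*100%:R+52%:R)*U^+2*V^+22*K^+5*a^+10*c^+20 + (1%:R*100%:R+60%:R)*U^+2*V^+22*K^+5*a^+11*c^+19 - 40%:R*U^+2*V^+22*K^+5*a^+12*c^+18 - 64%:R*U^+2*V^+22*K^+5*a^+13*c^+17 - 16%:R*U^+2*V^+22*K^+5*a^+14*c^+16 + 4%:R*U^+2*V^+22*K^+6*a^+2*c^+30 + 16%:R*U^+2*V^+22*K^+6*a^+3*c^+29 + 12%:R*U^+2*V^+22*K^+6*a^+4*c^+28 - 32%:R*U^+2*V^+22*K^+6*a^+5*c^+27 - 56%:R*U^+2*V^+22*K^+6*a^+6*c^+26 + 56%:R*U^+2*V^+22*K^+6*a^+8*c^+24 + 32%:R*U^+2*V^+22*K^+6*a^+9*c^+23 - 12%:R*U^+2*V^+22*K^+6*a^+10*c^+22 - 16%:R*U^+2*V^+22*K^+6*a^+11*c^+21 - 4%:R*U^+2*V^+22*K^+6*a^+12*c^+20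 - (1%:R*100%:R+20%:R)*U^+4*V^+20*K^+3*c^+26 - (3%:R*100%:R+84%:R)*U^+4*V^+20*K^+3*a*c^+25 - (2%:R*100%:R+16%:R)*U^+4*V^+20*K^+3*a^+2*c^+24 + (3%:R*100%:R+84%:R)*U^+4*V^+20*K^+3*a^+3*c^+23 + (3%:R*100%:R+36%:R)*U^+4*V^+20*K^+3*a^+4*c^+22 + (3%:R*100%:R+36%:R)*U^+4*V^+20*K^+3*a^+6*c^+20 + (3%:R*100%:R+84%:R)*U^+4*V^+20*K^+3*a^+7*c^+19 - (2%:R*100%:R+16%:R)*U^+4*V^+20*K^+3*a^+8*c^+18 - (3%:R*100%:R+84%:R)*U^+4*V^+20*K^+3*a^+9*c^+17 - (1%:R*100%:R+20%:R)*U^+4*V^+20*K^+3*a^+10*c^+16 - 80%:R*U^+4*V^+20*K^+4*c^+28 - (2%:R*100%:R+56%:R)*U^+4*V^+20*K^+4*a*c^+27 + 88%:R*U^+4*V^+20*K^+4*a^+2*c^+26 + (9%:R*100%:R+60%:R)*U^+4*V^+20*K^+4*a^+3*c^+25 + (5%:R*100%:R+36%:R)*U^+4*V^+20*K^+4*a^+4*c^+24 - (7%:R*100%:R+4%:R)*U^+4*V^+20*K^+4*a^+5*c^+23 - 80%:R*U^+4*V^+20*K^+4*a^+6*c^+22 + (4%:R*100%:R+48%:R)*U^+4*V^+20*K^+4*a^+7*c^+21 - (11%:R*100%:R+20%:R)*U^+4*V^+20*K^+4*a^+8*c^+20 - (13%:R*100%:R+44%:R)*U^+4*V^+20*K^+4*a^+9*c^+19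 + (3%:R*100%:R+76%:R)*U^+4*V^+20*K^+4*a^+10*c^+18 + (8%:R*100%:R+96%:R)*U^+4*V^+20*K^+4*a^+11*c^+17 + (2%:R*100%:R+80%:R)*U^+4*V^+20*K^+4*a^+12*c^+16 + 40%:R*U^+4*V^+20*K^+5*c^+30 + (1%:R*100%:R+28%:R)*U^+4*V^+20*K^+5*a*c^+29 + (1%:R*100%:R+20%:R)*U^+4*V^+20*K^+5*a^+2*c^+28 - (1%:R*100%:R+92%:R)*U^+4*V^+20*K^+5*a^+4*c^+26 - (3%:R*100%:R+84%:R)*U^+4*V^+20*K^+5*a^+5*c^+25 - 48%:R*U^+4*V^+20*K^+5*a^+6*c^+24 + (2%:R*100%:R+56%:R)*U^+4*V^+20*K^+5*a^+7*c^+23 - (4%:R*100%:R+72%:R)*U^+4*V^+20*K^+5*a^+8*c^+22 - (5%:R*100%:R+12%:R)*U^+4*V^+20*K^+5*a^+9*c^+21 + (8%:R*100%:R+56%:R)*U^+4*V^+20*K^+5*a^+10*c^+20 + (10%:R*100%:R+24%:R)*U^+4*V^+20*K^+5*a^+11*c^+19 - (1%:R*100%:R+44%:R)*U^+4*V^+20*K^+5*a^+12*c^+18 - (5%:R*100%:R+12%:R)*U^+4*V^+20*K^+5*a^+13*c^+17 - (1%:R*100%:R+60%:R)*U^+4*V^+20*K^+5*a^+14*c^+16 - 24%:R*U^+4*V^+20*K^+6*a^+2*c^+30 - 64%:R*U^+4*V^+20*K^+6*a^+3*c^+29 - 8%:R*U^+4*V^+20*K^+6*a^+4*c^+28 + 64%:R*U^+4*V^+20*K^+6*a^+5*c^+27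 - 48%:R*U^+4*V^+20*K^+6*a^+6*c^+26 - 64%:R*U^+4*V^+20*K^+6*a^+7*c^+25 + (1%:R*100%:R+76%:R)*U^+4*V^+20*K^+6*a^+8*c^+24 + (1%:R*100%:R+92%:R)*U^+4*V^+20*K^+6*a^+9*c^+23 - 56%:R*U^+4*V^+20*K^+6*a^+10*c^+22 - (1%:R*100%:R+28%:R)*U^+4*V^+20*K^+6*a^+11*c^+21 - 40%:R*U^+4*V^+20*K^+6*a^+12*c^+20 + (5%:R*100%:R+40%:R)*U^+6*V^+18*K^+3*c^+26 + (12%:R*100%:R+96%:R)*U^+6*V^+18*K^+3*a*c^+25 + (4%:R*100%:R+68%:R)*U^+6*V^+18*K^+3*a^+2*c^+24 - (2%:R*100%:R+88%:R)*U^+6*V^+18*K^+3*a^+3*c^+23 + (5%:R*100%:R+4%:R)*U^+6*V^+18*K^+3*a^+4*c^+22 - (5%:R*100%:R+4%:R)*U^+6*V^+18*K^+3*a^+6*c^+20 + (2%:R*100%:R+88%:R)*U^+6*V^+18*K^+3*a^+7*c^+19 - (4%:R*100%:R+68%:R)*U^+6*V^+18*K^+3*a^+8*c^+18 - (12%:R*100%:R+96%:R)*U^+6*V^+18*K^+3*a^+9*c^+17 - (5%:R*100%:R+40%:R)*U^+6*V^+18*K^+3*a^+10*c^+16 + (3%:R*100%:R+60%:R)*U^+6*V^+18*K^+4*c^+28 + (8%:R*100%:R+64%:R)*U^+6*V^+18*K^+4*a*c^+27 - (5%:R*100%:R+64%:R)*U^+6*V^+18*K^+4*a^+2*c^+26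 - (20%:R*100%:R+64%:R)*U^+6*V^+18*K^+4*a^+3*c^+25 + 12%:R*U^+6*V^+18*K^+4*a^+4*c^+24 + (2%:R*100%:R+88%:R)*U^+6*V^+18*K^+4*a^+5*c^+23 - (15%:R*100%:R+12%:R)*U^+6*V^+18*K^+4*a^+6*c^+22 + (5%:R*100%:R+76%:R)*U^+6*V^+18*K^+4*a^+7*c^+21 + 96%:R*U^+6*V^+18*K^+4*a^+8*c^+20 - (26%:R*100%:R+88%:R)*U^+6*V^+18*K^+4*a^+9*c^+19 + (3%:R*100%:R+48%:R)*U^+6*V^+18*K^+4*a^+10*c^+18 + (30%:R*100%:R+24%:R)*U^+6*V^+18*K^+4*a^+11*c^+17 + (12%:R*100%:R+60%:R)*U^+6*V^+18*K^+4*a^+12*c^+16 - (1%:R*100%:R+80%:R)*U^+6*V^+18*K^+5*c^+30 - (4%:R*100%:R+32%:R)*U^+6*V^+18*K^+5*a*c^+29 - (2%:R*100%:R+60%:R)*U^+6*V^+18*K^+5*a^+2*c^+28 + (2%:R*100%:R+40%:R)*U^+6*V^+18*K^+5*a^+4*c^+26 + (1%:R*100%:R+28%:R)*U^+6*V^+18*K^+5*a^+5*c^+25 - (5%:R*100%:R+68%:R)*U^+6*V^+18*K^+5*a^+6*c^+24 + (2%:R*100%:R+88%:R)*U^+6*V^+18*K^+5*a^+7*c^+23 + (6%:R*100%:R+52%:R)*U^+6*V^+18*K^+5*a^+8*c^+22 - (10%:R*100%:R+40%:R)*U^+6*V^+18*K^+5*a^+9*c^+21 + (5%:R*100%:R+88%:R)*U^+6*V^+18*K^+5*a^+10*c^+20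 + (27%:R*100%:R+84%:R)*U^+6*V^+18*K^+5*a^+11*c^+19 + (2%:R*100%:R+48%:R)*U^+6*V^+18*K^+5*a^+12*c^+18 - (17%:R*100%:R+28%:R)*U^+6*V^+18*K^+5*a^+13*c^+17 - (7%:R*100%:R+20%:R)*U^+6*V^+18*K^+5*a^+14*c^+16 + 52%:R*U^+6*V^+18*K^+6*a^+2*c^+30 + 48%:R*U^+6*V^+18*K^+6*a^+3*c^+29 - 100%:R*U^+6*V^+18*K^+6*a^+4*c^+28 + 32%:R*U^+6*V^+18*K^+6*a^+5*c^+27 + (1%:R*100%:R+68%:R)*U^+6*V^+18*K^+6*a^+6*c^+26 - (1%:R*100%:R+28%:R)*U^+6*V^+18*K^+6*a^+7*c^+25 + 88%:R*U^+6*V^+18*K^+6*a^+8*c^+24 + (4%:R*100%:R+80%:R)*U^+6*V^+18*K^+6*a^+9*c^+23 - 28%:R*U^+6*V^+18*K^+6*a^+10*c^+22 - (4%:R*100%:R+32%:R)*U^+6*V^+18*K^+6*a^+11*c^+21 - (1%:R*100%:R+80%:R)*U^+6*V^+18*K^+6*a^+12*c^+20 - (14%:R*100%:R+40%:R)*U^+8*V^+16*K^+3*c^+26 - (23%:R*100%:R+4%:R)*U^+8*V^+16*K^+3*a*c^+25 - (2%:R*100%:R+88%:R)*U^+8*V^+16*K^+3*a^+2*c^+24 - (7%:R*100%:R+68%:R)*U^+8*V^+16*K^+3*a^+3*c^+23 - (13%:R*100%:R+44%:R)*U^+8*V^+16*K^+3*a^+4*c^+22 - (13%:R*100%:R+44%:R)*U^+8*V^+16*K^+3*a^+6*c^+20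 - (7%:R*100%:R+68%:R)*U^+8*V^+16*K^+3*a^+7*c^+19 - (2%:R*100%:R+88%:R)*U^+8*V^+16*K^+3*a^+8*c^+18 - (23%:R*100%:R+4%:R)*U^+8*V^+16*K^+3*a^+9*c^+17 - (14%:R*100%:R+40%:R)*U^+8*V^+16*K^+3*a^+10*c^+16 - (9%:R*100%:R+60%:R)*U^+8*V^+16*K^+4*c^+28 - (15%:R*100%:R+36%:R)*U^+8*V^+16*K^+4*a*c^+27 + (18%:R*100%:R+24%:R)*U^+8*V^+16*K^+4*a^+2*c^+26 + (21%:R*100%:R+76%:R)*U^+8*V^+16*K^+4*a^+3*c^+25 - (9%:R*100%:R+92%:R)*U^+8*V^+16*K^+4*a^+4*c^+24 + (14%:R*100%:R+8%:R)*U^+8*V^+16*K^+4*a^+5*c^+23 + (3%:R*100%:R+20%:R)*U^+8*V^+16*K^+4*a^+6*c^+22 - (8%:R*100%:R+96%:R)*U^+8*V^+16*K^+4*a^+7*c^+21 + (21%:R*100%:R+76%:R)*U^+8*V^+16*K^+4*a^+8*c^+20 - (24%:R*100%:R+32%:R)*U^+8*V^+16*K^+4*a^+9*c^+19 - (16%:R*100%:R+32%:R)*U^+8*V^+16*K^+4*a^+10*c^+18 + (53%:R*100%:R+76%:R)*U^+8*V^+16*K^+4*a^+11*c^+17 + (33%:R*100%:R+60%:R)*U^+8*V^+16*K^+4*a^+12*c^+16 + (4%:R*100%:R+80%:R)*U^+8*V^+16*K^+5*c^+30 + (7%:R*100%:R+68%:R)*U^+8*V^+16*K^+5*a*c^+29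 + (1%:R*100%:R+60%:R)*U^+8*V^+16*K^+5*a^+2*c^+28 + (7%:R*100%:R+68%:R)*U^+8*V^+16*K^+5*a^+5*c^+25 + (7%:R*100%:R+4%:R)*U^+8*V^+16*K^+5*a^+6*c^+24 - (5%:R*100%:R+12%:R)*U^+8*V^+16*K^+5*a^+7*c^+23 + (12%:R*100%:R+48%:R)*U^+8*V^+16*K^+5*a^+8*c^+22 - (9%:R*100%:R+92%:R)*U^+8*V^+16*K^+5*a^+10*c^+20 + (40%:R*100%:R+96%:R)*U^+8*V^+16*K^+5*a^+11*c^+19 + (23%:R*100%:R+68%:R)*U^+8*V^+16*K^+5*a^+12*c^+18 - (30%:R*100%:R+72%:R)*U^+8*V^+16*K^+5*a^+13*c^+17 - (19%:R*100%:R+20%:R)*U^+8*V^+16*K^+5*a^+14*c^+16 - 32%:R*U^+8*V^+16*K^+6*a^+2*c^+30 + (1%:R*100%:R+28%:R)*U^+8*V^+16*K^+6*a^+3*c^+29 + (1%:R*100%:R+60%:R)*U^+8*V^+16*K^+6*a^+4*c^+28 - (1%:R*100%:R+28%:R)*U^+8*V^+16*K^+6*a^+5*c^+27 + (1%:R*100%:R+92%:R)*U^+8*V^+16*K^+6*a^+6*c^+26 + (1%:R*100%:R+28%:R)*U^+8*V^+16*K^+6*a^+7*c^+25 - (1%:R*100%:R+92%:R)*U^+8*V^+16*K^+6*a^+8*c^+24 + (6%:R*100%:R+40%:R)*U^+8*V^+16*K^+6*a^+9*c^+23 + (3%:R*100%:R+52%:R)*U^+8*V^+16*K^+6*a^+10*c^+22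 - (7%:R*100%:R+68%:R)*U^+8*V^+16*K^+6*a^+11*c^+21 - (4%:R*100%:R+80%:R)*U^+8*V^+16*K^+6*a^+12*c^+20 + (25%:R*100%:R+20%:R)*U^+10*V^+14*K^+3*c^+26 + (20%:R*100%:R+16%:R)*U^+10*V^+14*K^+3*a*c^+25 - (5%:R*100%:R+4%:R)*U^+10*V^+14*K^+3*a^+2*c^+24 + (13%:R*100%:R+44%:R)*U^+10*V^+14*K^+3*a^+3*c^+23 - (3%:R*100%:R+36%:R)*U^+10*V^+14*K^+3*a^+4*c^+22 + (3%:R*100%:R+36%:R)*U^+10*V^+14*K^+3*a^+6*c^+20 - (13%:R*100%:R+44%:R)*U^+10*V^+14*K^+3*a^+7*c^+19 + (5%:R*100%:R+4%:R)*U^+10*V^+14*K^+3*a^+8*c^+18 - (20%:R*100%:R+16%:R)*U^+10*V^+14*K^+3*a^+9*c^+17 - (25%:R*100%:R+20%:R)*U^+10*V^+14*K^+3*a^+10*c^+16 + (16%:R*100%:R+80%:R)*U^+10*V^+14*K^+4*c^+28 + (13%:R*100%:R+44%:R)*U^+10*V^+14*K^+4*a*c^+27 - (35%:R*100%:R+28%:R)*U^+10*V^+14*K^+4*a^+2*c^+26 - (11%:R*100%:R+20%:R)*U^+10*V^+14*K^+4*a^+3*c^+25 + (1%:R*100%:R+84%:R)*U^+10*V^+14*K^+4*a^+4*c^+24 - (19%:R*100%:R+84%:R)*U^+10*V^+14*K^+4*a^+5*c^+23 + (10%:R*100%:R+8%:R)*U^+10*V^+14*K^+4*a^+6*c^+22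 - (20%:R*100%:R+48%:R)*U^+10*V^+14*K^+4*a^+7*c^+21 + (3%:R*100%:R+20%:R)*U^+10*V^+14*K^+4*a^+8*c^+20 - (8%:R*100%:R+96%:R)*U^+10*V^+14*K^+4*a^+9*c^+19 - (55%:R*100%:R+44%:R)*U^+10*V^+14*K^+4*a^+10*c^+18 + (47%:R*100%:R+4%:R)*U^+10*V^+14*K^+4*a^+11*c^+17 + (58%:R*100%:R+80%:R)*U^+10*V^+14*K^+4*a^+12*c^+16 - (8%:R*100%:R+40%:R)*U^+10*V^+14*K^+5*c^+30 - (6%:R*100%:R+72%:R)*U^+10*V^+14*K^+5*a*c^+29 + (2%:R*100%:R+80%:R)*U^+10*V^+14*K^+5*a^+2*c^+28 - (2%:R*100%:R+88%:R)*U^+10*V^+14*K^+5*a^+4*c^+26 - (10%:R*100%:R+24%:R)*U^+10*V^+14*K^+5*a^+5*c^+25 + (4%:R*100%:R+64%:R)*U^+10*V^+14*K^+5*a^+6*c^+24 - 64%:R*U^+10*V^+14*K^+5*a^+7*c^+23 - (3%:R*100%:R+28%:R)*U^+10*V^+14*K^+5*a^+8*c^+22 + (13%:R*100%:R+12%:R)*U^+10*V^+14*K^+5*a^+9*c^+21 - (18%:R*100%:R+64%:R)*U^+10*V^+14*K^+5*a^+10*c^+20 + (31%:R*100%:R+36%:R)*U^+10*V^+14*K^+5*a^+11*c^+19 + (59%:R*100%:R+36%:R)*U^+10*V^+14*K^+5*a^+12*c^+18 - (26%:R*100%:R+88%:R)*U^+10*V^+14*K^+5*a^+13*c^+17 -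 (33%:R*100%:R+60%:R)*U^+10*V^+14*K^+5*a^+14*c^+16 - 56%:R*U^+10*V^+14*K^+6*a^+2*c^+30 - (2%:R*100%:R+24%:R)*U^+10*V^+14*K^+6*a^+3*c^+29 + 88%:R*U^+10*V^+14*K^+6*a^+4*c^+28 + 64%:R*U^+10*V^+14*K^+6*a^+5*c^+27 - (1%:R*100%:R+12%:R)*U^+10*V^+14*K^+6*a^+6*c^+26 + (3%:R*100%:R+84%:R)*U^+10*V^+14*K^+6*a^+7*c^+25 - (1%:R*100%:R+44%:R)*U^+10*V^+14*K^+6*a^+8*c^+24 + (4%:R*100%:R+48%:R)*U^+10*V^+14*K^+6*a^+9*c^+23 + (10%:R*100%:R+64%:R)*U^+10*V^+14*K^+6*a^+10*c^+22 - (6%:R*100%:R+72%:R)*U^+10*V^+14*K^+6*a^+11*c^+21 - (8%:R*100%:R+40%:R)*U^+10*V^+14*K^+6*a^+12*c^+20 - (30%:R*100%:R+24%:R)*U^+12*V^+12*K^+3*c^+26 + (10%:R*100%:R+8%:R)*U^+12*V^+12*K^+3*a^+2*c^+24 + (20%:R*100%:R+16%:R)*U^+12*V^+12*K^+3*a^+4*c^+22 + (20%:R*100%:R+16%:R)*U^+12*V^+12*K^+3*a^+6*c^+20 + (10%:R*100%:R+8%:R)*U^+12*V^+12*K^+3*a^+8*c^+18 - (30%:R*100%:R+24%:R)*U^+12*V^+12*K^+3*a^+10*c^+16 - (20%:R*100%:R+16%:R)*U^+12*V^+12*K^+4*c^+28 + (43%:R*100%:R+68%:R)*U^+12*V^+12*K^+4*a^+2*c^+26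 + (9%:R*100%:R+12%:R)*U^+12*V^+12*K^+4*a^+4*c^+24 - (4%:R*100%:R+80%:R)*U^+12*V^+12*K^+4*a^+6*c^+22 - (21%:R*100%:R+12%:R)*U^+12*V^+12*K^+4*a^+8*c^+20 - (77%:R*100%:R+28%:R)*U^+12*V^+12*K^+4*a^+10*c^+18 + (70%:R*100%:R+56%:R)*U^+12*V^+12*K^+4*a^+12*c^+16 + (10%:R*100%:R+8%:R)*U^+12*V^+12*K^+5*c^+30 - (5%:R*100%:R+60%:R)*U^+12*V^+12*K^+5*a^+2*c^+28 + (3%:R*100%:R+84%:R)*U^+12*V^+12*K^+5*a^+4*c^+26 - (13%:R*100%:R+12%:R)*U^+12*V^+12*K^+5*a^+6*c^+24 - (15%:R*100%:R+52%:R)*U^+12*V^+12*K^+5*a^+8*c^+22 - (17%:R*100%:R+76%:R)*U^+12*V^+12*K^+5*a^+10*c^+20 + (78%:R*100%:R+40%:R)*U^+12*V^+12*K^+5*a^+12*c^+18 - (40%:R*100%:R+32%:R)*U^+12*V^+12*K^+5*a^+14*c^+16 + (1%:R*100%:R+12%:R)*U^+12*V^+12*K^+6*a^+2*c^+30 - (3%:R*100%:R+4%:R)*U^+12*V^+12*K^+6*a^+4*c^+28 - (2%:R*100%:R+88%:R)*U^+12*V^+12*K^+6*a^+6*c^+26 + 32%:R*U^+12*V^+12*K^+6*a^+8*c^+24 + (14%:R*100%:R+56%:R)*U^+12*V^+12*K^+6*a^+10*c^+22 - (10%:R*100%:R+8%:R)*U^+12*V^+12*K^+6*a^+12*c^+20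 + (25%:R*100%:R+20%:R)*U^+14*V^+10*K^+3*c^+26 - (20%:R*100%:R+16%:R)*U^+14*V^+10*K^+3*a*c^+25 - (5%:R*100%:R+4%:R)*U^+14*V^+10*K^+3*a^+2*c^+24 - (13%:R*100%:R+44%:R)*U^+14*V^+10*K^+3*a^+3*c^+23 - (3%:R*100%:R+36%:R)*U^+14*V^+10*K^+3*a^+4*c^+22 + (3%:R*100%:R+36%:R)*U^+14*V^+10*K^+3*a^+6*c^+20 + (13%:R*100%:R+44%:R)*U^+14*V^+10*K^+3*a^+7*c^+19 + (5%:R*100%:R+4%:R)*U^+14*V^+10*K^+3*a^+8*c^+18 + (20%:R*100%:R+16%:R)*U^+14*V^+10*K^+3*a^+9*c^+17 - (25%:R*100%:R+20%:R)*U^+14*V^+10*K^+3*a^+10*c^+16 + (16%:R*100%:R+80%:R)*U^+14*V^+10*K^+4*c^+28 - (13%:R*100%:R+44%:R)*U^+14*V^+10*K^+4*a*c^+27 - (35%:R*100%:R+28%:R)*U^+14*V^+10*K^+4*a^+2*c^+26 + (11%:R*100%:R+20%:R)*U^+14*V^+10*K^+4*a^+3*c^+25 + (1%:R*100%:R+84%:R)*U^+14*V^+10*K^+4*a^+4*c^+24 + (19%:R*100%:R+84%:R)*U^+14*V^+10*K^+4*a^+5*c^+23 + (10%:R*100%:R+8%:R)*U^+14*V^+10*K^+4*a^+6*c^+22 + (20%:R*100%:R+48%:R)*U^+14*V^+10*K^+4*a^+7*c^+21 + (3%:R*100%:R+20%:R)*U^+14*V^+10*K^+4*a^+8*c^+20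 + (8%:R*100%:R+96%:R)*U^+14*V^+10*K^+4*a^+9*c^+19 - (55%:R*100%:R+44%:R)*U^+14*V^+10*K^+4*a^+10*c^+18 - (47%:R*100%:R+4%:R)*U^+14*V^+10*K^+4*a^+11*c^+17 + (58%:R*100%:R+80%:R)*U^+14*V^+10*K^+4*a^+12*c^+16 - (8%:R*100%:R+40%:R)*U^+14*V^+10*K^+5*c^+30 + (6%:R*100%:R+72%:R)*U^+14*V^+10*K^+5*a*c^+29 + (2%:R*100%:R+80%:R)*U^+14*V^+10*K^+5*a^+2*c^+28 - (2%:R*100%:R+88%:R)*U^+14*V^+10*K^+5*a^+4*c^+26 + (10%:R*100%:R+24%:R)*U^+14*V^+10*K^+5*a^+5*c^+25 + (4%:R*100%:R+64%:R)*U^+14*V^+10*K^+5*a^+6*c^+24 + 64%:R*U^+14*V^+10*K^+5*a^+7*c^+23 - (3%:R*100%:R+28%:R)*U^+14*V^+10*K^+5*a^+8*c^+22 - (13%:R*100%:R+12%:R)*U^+14*V^+10*K^+5*a^+9*c^+21 - (18%:R*100%:R+64%:R)*U^+14*V^+10*K^+5*a^+10*c^+20 - (31%:R*100%:R+36%:R)*U^+14*V^+10*K^+5*a^+11*c^+19 + (59%:R*100%:R+36%:R)*U^+14*V^+10*K^+5*a^+12*c^+18 + (26%:R*100%:R+88%:R)*U^+14*V^+10*K^+5*a^+13*c^+17 - (33%:R*100%:R+60%:R)*U^+14*V^+10*K^+5*a^+14*c^+16 - 56%:R*U^+14*V^+10*K^+6*a^+2*c^+30 + (2%:R*100%:R+24%:R)*U^+14*V^+10*K^+6*a^+3*c^+29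 + 88%:R*U^+14*V^+10*K^+6*a^+4*c^+28 - 64%:R*U^+14*V^+10*K^+6*a^+5*c^+27 - (1%:R*100%:R+12%:R)*U^+14*V^+10*K^+6*a^+6*c^+26 - (3%:R*100%:R+84%:R)*U^+14*V^+10*K^+6*a^+7*c^+25 - (1%:R*100%:R+44%:R)*U^+14*V^+10*K^+6*a^+8*c^+24 - (4%:R*100%:R+48%:R)*U^+14*V^+10*K^+6*a^+9*c^+23 + (10%:R*100%:R+64%:R)*U^+14*V^+10*K^+6*a^+10*c^+22 + (6%:R*100%:R+72%:R)*U^+14*V^+10*K^+6*a^+11*c^+21 - (8%:R*100%:R+40%:R)*U^+14*V^+10*K^+6*a^+12*c^+20 - (14%:R*100%:R+40%:R)*U^+16*V^+8*K^+3*c^+26 + (23%:R*100%:R+4%:R)*U^+16*V^+8*K^+3*a*c^+25 - (2%:R*100%:R+88%:R)*U^+16*V^+8*K^+3*a^+2*c^+24 + (7%:R*100%:R+68%:R)*U^+16*V^+8*K^+3*a^+3*c^+23 - (13%:R*100%:R+44%:R)*U^+16*V^+8*K^+3*a^+4*c^+22 - (13%:R*100%:R+44%:R)*U^+16*V^+8*K^+3*a^+6*c^+20 + (7%:R*100%:R+68%:R)*U^+16*V^+8*K^+3*a^+7*c^+19 - (2%:R*100%:R+88%:R)*U^+16*V^+8*K^+3*a^+8*c^+18 + (23%:R*100%:R+4%:R)*U^+16*V^+8*K^+3*a^+9*c^+17 - (14%:R*100%:R+40%:R)*U^+16*V^+8*K^+3*a^+10*c^+16 - (9%:R*100%:R+60%:R)*U^+16*V^+8*K^+4*c^+28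 + (15%:R*100%:R+36%:R)*U^+16*V^+8*K^+4*a*c^+27 + (18%:R*100%:R+24%:R)*U^+16*V^+8*K^+4*a^+2*c^+26 - (21%:R*100%:R+76%:R)*U^+16*V^+8*K^+4*a^+3*c^+25 - (9%:R*100%:R+92%:R)*U^+16*V^+8*K^+4*a^+4*c^+24 - (14%:R*100%:R+8%:R)*U^+16*V^+8*K^+4*a^+5*c^+23 + (3%:R*100%:R+20%:R)*U^+16*V^+8*K^+4*a^+6*c^+22 + (8%:R*100%:R+96%:R)*U^+16*V^+8*K^+4*a^+7*c^+21 + (21%:R*100%:R+76%:R)*U^+16*V^+8*K^+4*a^+8*c^+20 + (24%:R*100%:R+32%:R)*U^+16*V^+8*K^+4*a^+9*c^+19 - (16%:R*100%:R+32%:R)*U^+16*V^+8*K^+4*a^+10*c^+18 - (53%:R*100%:R+76%:R)*U^+16*V^+8*K^+4*a^+11*c^+17 + (33%:R*100%:R+60%:R)*U^+16*V^+8*K^+4*a^+12*c^+16 + (4%:R*100%:R+80%:R)*U^+16*V^+8*K^+5*c^+30 - (7%:R*100%:R+68%:R)*U^+16*V^+8*K^+5*a*c^+29 + (1%:R*100%:R+60%:R)*U^+16*V^+8*K^+5*a^+2*c^+28 - (7%:R*100%:R+68%:R)*U^+16*V^+8*K^+5*a^+5*c^+25 + (7%:R*100%:R+4%:R)*U^+16*V^+8*K^+5*a^+6*c^+24 + (5%:R*100%:R+12%:R)*U^+16*V^+8*K^+5*a^+7*c^+23 + (12%:R*100%:R+48%:R)*U^+16*V^+8*K^+5*a^+8*c^+22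 - (9%:R*100%:R+92%:R)*U^+16*V^+8*K^+5*a^+10*c^+20 - (40%:R*100%:R+96%:R)*U^+16*V^+8*K^+5*a^+11*c^+19 + (23%:R*100%:R+68%:R)*U^+16*V^+8*K^+5*a^+12*c^+18 + (30%:R*100%:R+72%:R)*U^+16*V^+8*K^+5*a^+13*c^+17 - (19%:R*100%:R+20%:R)*U^+16*V^+8*K^+5*a^+14*c^+16 - 32%:R*U^+16*V^+8*K^+6*a^+2*c^+30 - (1%:R*100%:R+28%:R)*U^+16*V^+8*K^+6*a^+3*c^+29 + (1%:R*100%:R+60%:R)*U^+16*V^+8*K^+6*a^+4*c^+28 + (1%:R*100%:R+28%:R)*U^+16*V^+8*K^+6*a^+5*c^+27 + (1%:R*100%:R+92%:R)*U^+16*V^+8*K^+6*a^+6*c^+26 - (1%:R*100%:R+28%:R)*U^+16*V^+8*K^+6*a^+7*c^+25 - (1%:R*100%:R+92%:R)*U^+16*V^+8*K^+6*a^+8*c^+24 - (6%:R*100%:R+40%:R)*U^+16*V^+8*K^+6*a^+9*c^+23 + (3%:R*100%:R+52%:R)*U^+16*V^+8*K^+6*a^+10*c^+22 + (7%:R*100%:R+68%:R)*U^+16*V^+8*K^+6*a^+11*c^+21 - (4%:R*100%:R+80%:R)*U^+16*V^+8*K^+6*a^+12*c^+20 + (5%:R*100%:R+40%:R)*U^+18*V^+6*K^+3*c^+26 - (12%:R*100%:R+96%:R)*U^+18*V^+6*K^+3*a*c^+25 + (4%:R*100%:R+68%:R)*U^+18*V^+6*K^+3*a^+2*c^+24 +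 (2%:R*100%:R+88%:R)*U^+18*V^+6*K^+3*a^+3*c^+23 + (5%:R*100%:R+4%:R)*U^+18*V^+6*K^+3*a^+4*c^+22 - (5%:R*100%:R+4%:R)*U^+18*V^+6*K^+3*a^+6*c^+20 - (2%:R*100%:R+88%:R)*U^+18*V^+6*K^+3*a^+7*c^+19 - (4%:R*100%:R+68%:R)*U^+18*V^+6*K^+3*a^+8*c^+18 + (12%:R*100%:R+96%:R)*U^+18*V^+6*K^+3*a^+9*c^+17 - (5%:R*100%:R+40%:R)*U^+18*V^+6*K^+3*a^+10*c^+16 + (3%:R*100%:R+60%:R)*U^+18*V^+6*K^+4*c^+28 - (8%:R*100%:R+64%:R)*U^+18*V^+6*K^+4*a*c^+27 - (5%:R*100%:R+64%:R)*U^+18*V^+6*K^+4*a^+2*c^+26 + (20%:R*100%:R+64%:R)*U^+18*V^+6*K^+4*a^+3*c^+25 + 12%:R*U^+18*V^+6*K^+4*a^+4*c^+24 - (2%:R*100%:R+88%:R)*U^+18*V^+6*K^+4*a^+5*c^+23 - (15%:R*100%:R+12%:R)*U^+18*V^+6*K^+4*a^+6*c^+22 - (5%:R*100%:R+76%:R)*U^+18*V^+6*K^+4*a^+7*c^+21 + 96%:R*U^+18*V^+6*K^+4*a^+8*c^+20 + (26%:R*100%:R+88%:R)*U^+18*V^+6*K^+4*a^+9*c^+19 + (3%:R*100%:R+48%:R)*U^+18*V^+6*K^+4*a^+10*c^+18 - (30%:R*100%:R+24%:R)*U^+18*V^+6*K^+4*a^+11*c^+17 + (12%:R*100%:R+60%:R)*U^+18*V^+6*K^+4*a^+12*c^+16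 - (1%:R*100%:R+80%:R)*U^+18*V^+6*K^+5*c^+30 + (4%:R*100%:R+32%:R)*U^+18*V^+6*K^+5*a*c^+29 - (2%:R*100%:R+60%:R)*U^+18*V^+6*K^+5*a^+2*c^+28 + (2%:R*100%:R+40%:R)*U^+18*V^+6*K^+5*a^+4*c^+26 - (1%:R*100%:R+28%:R)*U^+18*V^+6*K^+5*a^+5*c^+25 - (5%:R*100%:R+68%:R)*U^+18*V^+6*K^+5*a^+6*c^+24 - (2%:R*100%:R+88%:R)*U^+18*V^+6*K^+5*a^+7*c^+23 + (6%:R*100%:R+52%:R)*U^+18*V^+6*K^+5*a^+8*c^+22 + (10%:R*100%:R+40%:R)*U^+18*V^+6*K^+5*a^+9*c^+21 + (5%:R*100%:R+88%:R)*U^+18*V^+6*K^+5*a^+10*c^+20 - (27%:R*100%:R+84%:R)*U^+18*V^+6*K^+5*a^+11*c^+19 + (2%:R*100%:R+48%:R)*U^+18*V^+6*K^+5*a^+12*c^+18 + (17%:R*100%:R+28%:R)*U^+18*V^+6*K^+5*a^+13*c^+17 - (7%:R*100%:R+20%:R)*U^+18*V^+6*K^+5*a^+14*c^+16 + 52%:R*U^+18*V^+6*K^+6*a^+2*c^+30 - 48%:R*U^+18*V^+6*K^+6*a^+3*c^+29 - 100%:R*U^+18*V^+6*K^+6*a^+4*c^+28 - 32%:R*U^+18*V^+6*K^+6*a^+5*c^+27 + (1%:R*100%:R+68%:R)*U^+18*V^+6*K^+6*a^+6*c^+26 + (1%:R*100%:R+28%:R)*U^+18*V^+6*K^+6*a^+7*c^+25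 + 88%:R*U^+18*V^+6*K^+6*a^+8*c^+24 - (4%:R*100%:R+80%:R)*U^+18*V^+6*K^+6*a^+9*c^+23 - 28%:R*U^+18*V^+6*K^+6*a^+10*c^+22 + (4%:R*100%:R+32%:R)*U^+18*V^+6*K^+6*a^+11*c^+21 - (1%:R*100%:R+80%:R)*U^+18*V^+6*K^+6*a^+12*c^+20 - (1%:R*100%:R+20%:R)*U^+20*V^+4*K^+3*c^+26 + (3%:R*100%:R+84%:R)*U^+20*V^+4*K^+3*a*c^+25 - (2%:R*100%:R+16%:R)*U^+20*V^+4*K^+3*a^+2*c^+24 - (3%:R*100%:R+84%:R)*U^+20*V^+4*K^+3*a^+3*c^+23 + (3%:R*100%:R+36%:R)*U^+20*V^+4*K^+3*a^+4*c^+22 + (3%:R*100%:R+36%:R)*U^+20*V^+4*K^+3*a^+6*c^+20 - (3%:R*100%:R+84%:R)*U^+20*V^+4*K^+3*a^+7*c^+19 - (2%:R*100%:R+16%:R)*U^+20*V^+4*K^+3*a^+8*c^+18 + (3%:R*100%:R+84%:R)*U^+20*V^+4*K^+3*a^+9*c^+17 - (1%:R*100%:R+20%:R)*U^+20*V^+4*K^+3*a^+10*c^+16 - 80%:R*U^+20*V^+4*K^+4*c^+28 + (2%:R*100%:R+56%:R)*U^+20*V^+4*K^+4*a*c^+27 + 88%:R*U^+20*V^+4*K^+4*a^+2*c^+26 - (9%:R*100%:R+60%:R)*U^+20*V^+4*K^+4*a^+3*c^+25 + (5%:R*100%:R+36%:R)*U^+20*V^+4*K^+4*a^+4*c^+24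 + (7%:R*100%:R+4%:R)*U^+20*V^+4*K^+4*a^+5*c^+23 - 80%:R*U^+20*V^+4*K^+4*a^+6*c^+22 - (4%:R*100%:R+48%:R)*U^+20*V^+4*K^+4*a^+7*c^+21 - (11%:R*100%:R+20%:R)*U^+20*V^+4*K^+4*a^+8*c^+20 + (13%:R*100%:R+44%:R)*U^+20*V^+4*K^+4*a^+9*c^+19 + (3%:R*100%:R+76%:R)*U^+20*V^+4*K^+4*a^+10*c^+18 - (8%:R*100%:R+96%:R)*U^+20*V^+4*K^+4*a^+11*c^+17 + (2%:R*100%:R+80%:R)*U^+20*V^+4*K^+4*a^+12*c^+16 + 40%:R*U^+20*V^+4*K^+5*c^+30 - (1%:R*100%:R+28%:R)*U^+20*V^+4*K^+5*a*c^+29 + (1%:R*100%:R+20%:R)*U^+20*V^+4*K^+5*a^+2*c^+28 - (1%:R*100%:R+92%:R)*U^+20*V^+4*K^+5*a^+4*c^+26 + (3%:R*100%:R+84%:R)*U^+20*V^+4*K^+5*a^+5*c^+25 - 48%:R*U^+20*V^+4*K^+5*a^+6*c^+24 - (2%:R*100%:R+56%:R)*U^+20*V^+4*K^+5*a^+7*c^+23 - (4%:R*100%:R+72%:R)*U^+20*V^+4*K^+5*a^+8*c^+22 + (5%:R*100%:R+12%:R)*U^+20*V^+4*K^+5*a^+9*c^+21 + (8%:R*100%:R+56%:R)*U^+20*V^+4*K^+5*a^+10*c^+20 - (10%:R*100%:R+24%:R)*U^+20*V^+4*K^+5*a^+11*c^+19 - (1%:R*100%:R+44%:R)*U^+20*V^+4*K^+5*a^+12*c^+18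 + (5%:R*100%:R+12%:R)*U^+20*V^+4*K^+5*a^+13*c^+17 - (1%:R*100%:R+60%:R)*U^+20*V^+4*K^+5*a^+14*c^+16 - 24%:R*U^+20*V^+4*K^+6*a^+2*c^+30 + 64%:R*U^+20*V^+4*K^+6*a^+3*c^+29 - 8%:R*U^+20*V^+4*K^+6*a^+4*c^+28 - 64%:R*U^+20*V^+4*K^+6*a^+5*c^+27 - 48%:R*U^+20*V^+4*K^+6*a^+6*c^+26 + 64%:R*U^+20*V^+4*K^+6*a^+7*c^+25 + (1%:R*100%:R+76%:R)*U^+20*V^+4*K^+6*a^+8*c^+24 - (1%:R*100%:R+92%:R)*U^+20*V^+4*K^+6*a^+9*c^+23 - 56%:R*U^+20*V^+4*K^+6*a^+10*c^+22 + (1%:R*100%:R+28%:R)*U^+20*V^+4*K^+6*a^+11*c^+21 - 40%:R*U^+20*V^+4*K^+6*a^+12*c^+20 + 12%:R*U^+22*V^+2*K^+3*c^+26 - 48%:R*U^+22*V^+2*K^+3*a*c^+25 + 36%:R*U^+22*V^+2*K^+3*a^+2*c^+24 + 96%:R*U^+22*V^+2*K^+3*a^+3*c^+23 - (1%:R*100%:R+68%:R)*U^+22*V^+2*K^+3*a^+4*c^+22 + (1%:R*100%:R+68%:R)*U^+22*V^+2*K^+3*a^+6*c^+20 - 96%:R*U^+22*V^+2*K^+3*a^+7*c^+19 - 36%:R*U^+22*V^+2*K^+3*a^+8*c^+18 + 48%:R*U^+22*V^+2*K^+3*a^+9*c^+17 - 12%:R*U^+22*V^+2*K^+3*a^+10*c^+16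 + 8%:R*U^+22*V^+2*K^+4*c^+28 - 32%:R*U^+22*V^+2*K^+4*a*c^+27 - 4%:R*U^+22*V^+2*K^+4*a^+2*c^+26 + (1%:R*100%:R+76%:R)*U^+22*V^+2*K^+4*a^+3*c^+25 - (1%:R*100%:R+96%:R)*U^+22*V^+2*K^+4*a^+4*c^+24 - (2%:R*100%:R+24%:R)*U^+22*V^+2*K^+4*a^+5*c^+23 + (5%:R*100%:R+4%:R)*U^+22*V^+2*K^+4*a^+6*c^+22 - 64%:R*U^+22*V^+2*K^+4*a^+7*c^+21 - (4%:R*100%:R+16%:R)*U^+22*V^+2*K^+4*a^+8*c^+20 + (2%:R*100%:R+56%:R)*U^+22*V^+2*K^+4*a^+9*c^+19 + 76%:R*U^+22*V^+2*K^+4*a^+10*c^+18 - (1%:R*100%:R+12%:R)*U^+22*V^+2*K^+4*a^+11*c^+17 + 28%:R*U^+22*V^+2*K^+4*a^+12*c^+16 - 4%:R*U^+22*V^+2*K^+5*c^+30 + 16%:R*U^+22*V^+2*K^+5*a*c^+29 - 20%:R*U^+22*V^+2*K^+5*a^+2*c^+28 + 48%:R*U^+22*V^+2*K^+5*a^+4*c^+26 - (1%:R*100%:R+28%:R)*U^+22*V^+2*K^+5*a^+5*c^+25 + (1%:R*100%:R+4%:R)*U^+22*V^+2*K^+5*a^+6*c^+24 + (1%:R*100%:R+60%:R)*U^+22*V^+2*K^+5*a^+7*c^+23 - (3%:R*100%:R+24%:R)*U^+22*V^+2*K^+5*a^+8*c^+22 + 48%:R*U^+22*V^+2*K^+5*a^+9*c^+21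 + (2%:R*100%:R+52%:R)*U^+22*V^+2*K^+5*a^+10*c^+20 - (1%:R*100%:R+60%:R)*U^+22*V^+2*K^+5*a^+11*c^+19 - 40%:R*U^+22*V^+2*K^+5*a^+12*c^+18 + 64%:R*U^+22*V^+2*K^+5*a^+13*c^+17 - 16%:R*U^+22*V^+2*K^+5*a^+14*c^+16 + 4%:R*U^+22*V^+2*K^+6*a^+2*c^+30 - 16%:R*U^+22*V^+2*K^+6*a^+3*c^+29 + 12%:R*U^+22*V^+2*K^+6*a^+4*c^+28 + 32%:R*U^+22*V^+2*K^+6*a^+5*c^+27 - 56%:R*U^+22*V^+2*K^+6*a^+6*c^+26 + 56%:R*U^+22*V^+2*K^+6*a^+8*c^+24 - 32%:R*U^+22*V^+2*K^+6*a^+9*c^+23 - 12%:R*U^+22*V^+2*K^+6*a^+10*c^+22 + 16%:R*U^+22*V^+2*K^+6*a^+11*c^+21 - 4%:R*U^+22*V^+2*K^+6*a^+12*c^+20).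


Definition hh (R : rcfType) (a c K U1 V1 U2 V2 : R) : R :=
  (U1*V2 - U2*V1)^+2 - K*(a^+2*(U1*V2+U2*V1)^+2 + (a^+2-c^+2)*(V1*V2 - U1*U2)^+2).

Definition N3 (R : rcfType) (a c U V t2 t3 : R) : R :=
  let E1 := (a+c)*V^+2+(a-c)*U^+2 in
  let E2 := (a+c)+(a-c)*t2^+2 in
  let E3 := (a+c)+(a-c)*t3^+2 in
  let M1 := (t2-t3)^+2*E1 in let M2 := (t3*V-U)^+2*E2 in let M3 := (U-t2*V)^+2*E3 in
  (t2-t3)^+2*U^+2*V^+2*E2*E3*(M3-M1)*(M1-M2) + (t3*V-U)^+2*t2^+2*E1*E3*(M1-M2)*(M2-M3)
  + (U-t2*V)^+2*t3^+2*E1*E2*(M2-M3)*(M3-M1).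

Lemma N3_Fh (R : rcfType) (a c U V t2 t3 : R) :
  N3 a c U V t2 t3 = Fh a c U V (t2+t3) (t2*t3) 1.
Proof. rewrite /N3 /Fh. ring. Qed.

Lemma Fh_hom (R : rcfType) (a c U V S P al : R) :
  al^+8 * Fh a c U V S P 1 = Fh a c U V (al*S) (al*P) al.
Proof. rewrite /Fh. ring. Qed.

Lemma Fh_Z (R : rcfType) (a c U V K : R) :
  let b2 := a^+2 - c^+2 in
  let al := V^+2-K*(a^+2*V^+2+b2*U^+2) in
  let be := -(2*U*V*(1+K*c^+2)) in
  let ga := U^+2-K*(a^+2*U^+2+b2*V^+2) in
  c^+16 * Fh a c U V (-be) ga al = Zp a c U V K * (3 - 2*K*(a^+2+b2) - K^+2*c^+4).
Proof. rewrite /Fh /Zp /=. ring. Qed.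


Lemma core (R : rcfType) (a c K U V t2 t3 : R) :
  0 < c -> c < a -> 0 < K -> U^+2 + V^+2 != 0 -> t2 != t3 ->
  hh a c K U V t2 1 = 0 -> hh a c K U V t3 1 = 0 -> hh a c K t2 1 t3 1 = 0 ->
  N3 a c U V t2 t3 = 0.
Proof.
move=> c0 ca K0 UV0 t23 h2 h3 h23.
pose b2 := a^+2 - c^+2.
pose al := V^+2-K*(a^+2*V^+2+b2*U^+2).
pose be := -(2*U*V*(1+K*c^+2)).
pose ga := U^+2-K*(a^+2*U^+2+b2*V^+2).
have hq t : hh a c K U V t 1 = al*t^+2 + be*t + ga by rewrite /hh /al /be /ga /b2; ring.
have t23' : t2 - t3 != 0 by rewrite subr_eq0.
have E1 : al*(t2+t3) = -be.
  have : (t2-t3)*(al*(t2+t3)+be) = 0.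
    by rewrite -[RHS](subrr 0) -{1}h2 -h3 !hq; ring.
  by move/eqP; rewrite mulf_eq0 (negbTE t23') /= addr_eq0 => /eqP.
have E2 : al*(t2*t3) = ga.
  have : (t2-t3)*(al*(t2*t3)-ga) = 0.
    have -> : (t2-t3)*(al*(t2*t3)-ga) = t3 * hh a c K U V t2 1 - t2 * hh a c K U V t3 1
      by rewrite !hq; ring.
    by rewrite h2 h3; ring.
  by move/eqP; rewrite mulf_eq0 (negbTE t23') /= subr_eq0 => /eqP.
have b0 : 0 < b2 by rewrite /b2; nra.
have a0 : 0 < a by apply: lt_trans ca.
have UVp : 0 < U^+2 + V^+2.
  rewrite lt_def UV0 /=; apply: addr_ge0; apply: sqr_ge0.
have EA : 0 < (a+c)*V^+2+(a-c)*U^+2.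
  have ac : 0 < a - c by rewrite subr_gt0.
  have ac' : 0 < a + c by rewrite addr_gt0.
  nra.
have EB : 0 < (a-c)*V^+2+(a+c)*U^+2.
  have ac : 0 < a - c by rewrite subr_gt0.
  have ac' : 0 < a + c by rewrite addr_gt0.
  nra.
pose q0 := 3 - 2*K*(a^+2+b2) - K^+2*c^+4.
have Q0 : q0 = 0.
  have : K * q0 * (((a+c)*V^+2+(a-c)*U^+2) * ((a-c)*V^+2+(a+c)*U^+2)) = 0.
    have -> : K * q0 * (((a+c)*V^+2+(a-c)*U^+2) * ((a-c)*V^+2+(a+c)*U^+2)) =
      (al*(t2+t3))^+2 - 4*al*(al*(t2*t3)) - K*(a^+2*(al*(t2+t3))^+2 + b2*(al - al*(t2*t3))^+2).
      rewrite E1 E2 /q0 /al /be /ga /b2; ring.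
    have -> : (al*(t2+t3))^+2 - 4*al*(al*(t2*t3)) - K*(a^+2*(al*(t2+t3))^+2 + b2*(al - al*(t2*t3))^+2)
      = al^+2 * hh a c K t2 1 t3 1 by rewrite /hh /b2; ring.
    by rewrite h23 mulr0.
  move/eqP; rewrite !mulf_eq0 (gt_eqF K0) (gt_eqF EA) (gt_eqF EB) /= orbF => /eqP //.
have al0 : al != 0.
  apply/negP => /eqP al0.
  have be0 : be = 0 by apply/eqP; rewrite -oppr_eq0 -E1 al0 mul0r.
  have Kc : 0 < 1 + K*c^+2 by rewrite addr_gt0 // mulr_gt0 // exprn_gt0.
  have UV : U * V = 0.
    have : (U*V) * (2*(1+K*c^+2)) = 0 by rewrite -[RHS]oppr0 -be0 /be; ring.
    have nz : 0 < 2*(1+K*c^+2) by rewrite mulr_gt0.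
    by move/eqP; rewrite mulf_eq0 (gt_eqF nz) orbF => /eqP.
  move/eqP: UV; rewrite mulf_eq0 => /orP[] /eqP H.
  - have V0 : V^+2 != 0 by move: UV0; rewrite H expr0n /= add0r.
    have Ka : K * a^+2 = 1.
      have : V^+2 * (1 - K*a^+2) = 0 by rewrite -al0 /al H; ring.
      move/eqP; rewrite mulf_eq0 (negbTE V0) /= subr_eq0 => /eqP <-; done.
    have : a^+4 * q0 = - b2^+2.
      have -> : a^+4 * q0 = 3*a^+4 - 2*(K*a^+2)*a^+2*(a^+2+b2) - (K*a^+2)^+2*c^+4 by rewrite /q0; ring.
      by rewrite Ka /b2; ring.
    rewrite Q0 mulr0 => /eqP; rewrite eq_sym oppr_eq0 expf_eq0 /= (gt_eqF b0) //.
  - have U0 : 0 < U^+2 by rewrite lt_def sqr_ge0 andbT; move: UV0; rewrite H expr0n /= addr0.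
    have : al < 0 by rewrite /al H expr0n /= mulr0 !add0r oppr_lt0 mulr_gt0 // mulr_gt0.
    by rewrite al0 ltxx.
have key1 : al^+8 * N3 a c U V t2 t3 = Fh a c U V (-be) ga al.
  by rewrite N3_Fh Fh_hom E1 E2.
have key : al^+8 * c^+16 * N3 a c U V t2 t3 = Zp a c U V K * q0.
  by rewrite mulrAC key1 mulrC; exact: (Fh_Z a c U V K).
have nz : al^+8 * c^+16 != 0 by rewrite mulf_neq0 // expf_neq0 // gt_eqF.
by move: key; rewrite Q0 mulr0 => /eqP; rewrite mulf_eq0 (negbTE nz) /= => /eqP.
Qed.


Definition gE (R : rcfType) (a b : R) (P Q : pt R) : R :=
  ((P.1-Q.1)^+2/a^+2 + (P.2-Q.2)^+2/b^+2)/2.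
Definition sqd (R : rcfType) (P Q : pt R) : R := (P.1-Q.1)^+2 + (P.2-Q.2)^+2.
Definition dd (R : rcfType) (a c : R) (P : pt R) : R := a + c*P.1/a.
Definition Bexpr (R : rcfType) (a b c : R) (P1 P2 P3 : pt R) : R :=
  let G1 := gE a b P2 P3 in let G2 := gE a b P3 P1 in let G3 := gE a b P1 P2 in
  let d1 := dd a c P1 in let d2 := dd a c P2 in let d3 := dd a c P3 in
  let m1 := G1*d1 in let m2 := G2*d2 in let m3 := G3*d3 in
  G1*P1.2^+2*d2*d3*(m3-m1)*(m1-m2) + G2*P2.2^+2*d1*d3*(m1-m2)*(m2-m3)
  + G3*P3.2^+2*d1*d2*(m2-m3)*(m3-m1).
Definition ptUV (R : rcfType) (a b U V : R) : pt R :=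
  (a*(V^+2-U^+2)/(U^+2+V^+2), 2*b*U*V/(U^+2+V^+2)).
Definition hhb (R : rcfType) (a b K U1 V1 U2 V2 : R) : R :=
  (U1*V2 - U2*V1)^+2 - K*(a^+2*(U1*V2+U2*V1)^+2 + b^+2*(V1*V2 - U1*U2)^+2).

Lemma sq1_neq0 (R : rcfType) (t : R) : t^+2 + 1^+2 != 0.
Proof. by rewrite expr1n gt_eqF // ltr_pwDr // sqr_ge0. Qed.

Lemma chord_param (R : rcfType) (a b K U1 V1 U2 V2 : R) :
  a != 0 -> b != 0 -> U1^+2+V1^+2 != 0 -> U2^+2+V2^+2 != 0 ->
  let P := ptUV a b U1 V1 in let Q := ptUV a b U2 V2 in
  gE a b P Q ^+2 - K * sqd P Q =
  2 * gE a b P Q * hhb a b K U1 V1 U2 V2 / ((U1^+2+V1^+2)*(U2^+2+V2^+2)).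
Proof. move=> a0 b0 h1 h2 /=. rewrite /gE /sqd /hhb /ptUV /=. field. by rewrite h1 h2 a0 b0. Qed.

Lemma Bexpr_param (R : rcfType) (a b c U V t2 t3 : R) :
  a != 0 -> b != 0 -> U^+2+V^+2 != 0 ->
  Bexpr a b c (ptUV a b U V) (ptUV a b t2 1) (ptUV a b t3 1)
   * ((U^+2+V^+2)*(t2^+2+1^+2)*(t3^+2+1^+2))^+4 = 32 * b^+2 * N3 a c U V t2 t3.
Proof.
move=> a0 b0 h1. have h2 := sq1_neq0 t2. have h3 := sq1_neq0 t3.
rewrite expr1n in h2 h3.
rewrite /Bexpr /gE /dd /ptUV /N3 /=. field. by rewrite h1 h2 h3 a0 b0.
Qed.


Lemma param_t (R : rcfType) (a b : R) (P : pt R) :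
  0 < a -> 0 < b -> on_ellipse a b P -> P.1 != -a ->
  P = ptUV a b (a*P.2/(b*(a+P.1))) 1.
Proof.
case: P => x y /= a0 b0; rewrite /on_ellipse /= => e xa.
have ax : a + x != 0 by rewrite addrC addr_eq0.
have a0' : a != 0 by rewrite gt_eqF.
have b0' : b != 0 by rewrite gt_eqF.
have hy : a^+2*y^+2 = b^+2*(a^+2-x^+2).
  have : a^+2*y^+2 - b^+2*(a^+2-x^+2) = a^+2*b^+2*(x^+2/a^+2 + y^+2/b^+2 - 1).
    by field; rewrite a0' b0'.
  by rewrite e subrr mulr0 => /eqP; rewrite subr_eq0 => /eqP.
set t := a*y/(b*(a+x)).
have ht : t^+2 = (a-x)/(a+x).
  have : t^+2 - (a-x)/(a+x) = (a^+2*y^+2 - b^+2*(a^+2-x^+2))/(b^+2*(a+x)^+2)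
    by rewrite /t; field; rewrite ax b0'.
  by rewrite hy subrr mul0r => /eqP; rewrite subr_eq0 => /eqP.
have s2 : a - x + (a + x) != 0 by apply: lt0r_neq0; lra.
rewrite /ptUV expr1n ht; congr pair.
  by field; rewrite ax s2.
rewrite /t.
by field; rewrite ?ax ?s2 ?b0'.
Qed.

Lemma param_UV (R : rcfType) (a b : R) (P : pt R) :
  0 < a -> 0 < b -> on_ellipse a b P ->
  exists U V, U^+2 + V^+2 != 0 /\ P = ptUV a b U V.
Proof.
move=> a0 b0 e.
case: (eqVneq P.1 (-a)) => h; last first.
  exists (a*P.2/(b*(a+P.1))), 1; split; first exact: sq1_neq0.
  exact: param_t.
exists 1, 0; split; first by rewrite expr1n expr0n /= addr0 oner_eq0.
move: e; case: P h => x y /= ->; rewrite /on_ellipse /ptUV /= => e.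
have y0 : y = 0.
  have : y^+2 = b^+2*((-a)^+2/a^+2 + y^+2/b^+2 - (-a)^+2/a^+2).
    by field; rewrite (gt_eqF a0) (gt_eqF b0).
  rewrite e sqrrN divff ?expf_neq0 ?gt_eqF // subrr mulr0 => /eqP.
  by rewrite expf_eq0 /= => /eqP.
rewrite y0; congr pair; rewrite ?expr1n ?expr0n /=.
  by rewrite addr0 divr1 sub0r mulrN1.
by rewrite !mulr0 mul0r.
Qed.

Lemma gE_sym (R : rcfType) (a b : R) (P Q : pt R) : gE a b P Q = gE a b Q P.
Proof. rewrite /gE; congr (_/_); congr (_ + _); congr (_/_); ring. Qed.
Lemma sqd_sym (R : rcfType) (P Q : pt R) : sqd P Q = sqd Q P.
Proof. rewrite /sqd; ring. Qed.

Lemma hh_hhb (R : rcfType) (a b c K U1 V1 U2 V2 : R) :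
  c^+2 = a^+2 - b^+2 -> hh a c K U1 V1 U2 V2 = hhb a b K U1 V1 U2 V2.
Proof. move=> hc; rewrite /hh /hhb hc; congr (_ - K*(_ + _*_)); ring. Qed.

Lemma chord_hh (R : rcfType) (a b c K U1 V1 U2 V2 : R) :
  0 < a -> 0 < b -> c^+2 = a^+2 - b^+2 -> U1^+2+V1^+2 != 0 -> U2^+2+V2^+2 != 0 ->
  gE a b (ptUV a b U1 V1) (ptUV a b U2 V2) != 0 ->
  gE a b (ptUV a b U1 V1) (ptUV a b U2 V2) ^+2 = K * sqd (ptUV a b U1 V1) (ptUV a b U2 V2) ->
  hh a c K U1 V1 U2 V2 = 0.
Proof.
move=> a0 b0 hc h1 h2 g0 e.
rewrite (hh_hhb _ _ _ _ _ hc).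
have := chord_param K (lt0r_neq0 a0) (lt0r_neq0 b0) h1 h2 => /=.
rewrite e subrr => /esym /eqP.
have n2 : (2:R) != 0 by apply: lt0r_neq0; lra.
move: g0; move: (gE a b _ _) => G g0.
by rewrite !mulf_eq0 invr_eq0 mulf_eq0 (negbTE h1) (negbTE h2) (negbTE g0) (negbTE n2) /= orbF => /eqP.
Qed.

Lemma Bzero (R : rcfType) (a b c K : R) (P1 P2 P3 : pt R) :
  0 < b -> 0 < c -> c < a -> c^+2 = a^+2 - b^+2 -> 0 < K ->
  on_ellipse a b P1 -> on_ellipse a b P2 -> on_ellipse a b P3 ->
  P2 != P3 -> P2.1 != -a -> P3.1 != -a ->
  gE a b P2 P3 != 0 -> gE a b P3 P1 != 0 -> gE a b P1 P2 != 0 ->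
  gE a b P2 P3 ^+2 = K * sqd P2 P3 -> gE a b P3 P1 ^+2 = K * sqd P3 P1 ->
  gE a b P1 P2 ^+2 = K * sqd P1 P2 ->
  Bexpr a b c P1 P2 P3 = 0.
Proof.
move=> b0 c0 ca hc K0 e1 e2 e3 d23 x2 x3 g1 g2 g3 k1 k2 k3.
have a0 : 0 < a by apply: lt_trans ca.
have [U [V [UV hP1]]] := param_UV a0 b0 e1.
have hP2 := param_t a0 b0 e2 x2. have hP3 := param_t a0 b0 e3 x3.
move: d23 g1 g2 g3 k1 k2 k3.
rewrite hP1 hP2 hP3.
set t2 := a * P2.2 / (b * (a + P2.1)). set t3 := a * P3.2 / (b * (a + P3.1)).
move=> d23 g1 g2 g3 k1 k2 k3.
have t23 : t2 != t3 by apply: contraNneq d23 => ->.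
rewrite gE_sym sqd_sym in g2 k2.
have h12 := chord_hh a0 b0 hc UV (sq1_neq0 t2) g3 k3.
have h13 := chord_hh a0 b0 hc UV (sq1_neq0 t3) g2 k2.
have h23 := chord_hh a0 b0 hc (sq1_neq0 t2) (sq1_neq0 t3) g1 k1.
have N0 := core c0 ca K0 UV t23 h12 h13 h23.
have := Bexpr_param c t2 t3 (lt0r_neq0 a0) (lt0r_neq0 b0) UV.
rewrite N0 mulr0 => /eqP; rewrite mulf_eq0 expf_eq0 /= !mulf_eq0 (negbTE UV) !(negbTE (sq1_neq0 _)) /= orbF.
by move/eqP.
Qed.


Definition schurE (R : rcfType) (x y z : R) := x*(x-y)*(x-z) + y*(y-x)*(y-z) + z*(z-x)*(z-y).

Lemma schur_ord (R : rcfType) (x y z : R) : 0 <= z -> z < y -> y < x -> 0 < schurE x y z.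
Proof.
move=> z0 zy yx.
have -> : schurE x y z = (x-y)^+2*(x+y-z) + z*((x-z)*(y-z)) by rewrite /schurE; ring.
have hA : 0 < (x-y)^+2*(x+y-z).
  by apply: mulr_gt0; [rewrite exprn_gt0 // subr_gt0 | lra].
have hB : 0 <= z*((x-z)*(y-z)) by apply: mulr_ge0 => //; apply: mulr_ge0; lra.
lra.
Qed.

Lemma schur3 (R : rcfType) (x y z : R) :
  0 <= x -> 0 <= y -> 0 <= z -> x != y -> y != z -> z != x -> 0 < schurE x y z.
Proof.
move=> x0 y0 z0 xy yz zx.
have P1 : schurE x y z = schurE x z y by rewrite /schurE; ring.
have P2 : schurE x y z = schurE y x z by rewrite /schurE; ring.
have P3 : schurE x y z = schurE y z x by rewrite /schurE; ring.
have P4 : schurE x y z = schurE z x y by rewrite /schurE; ring.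
have P5 : schurE x y z = schurE z y x by rewrite /schurE; ring.
case/lt_total/orP: xy => hxy; case/lt_total/orP: yz => hyz; case/lt_total/orP: zx => hzx.
- exfalso; lra.
- by rewrite P5; apply: schur_ord.
- by rewrite P2; apply: schur_ord.
- by rewrite P3; apply: schur_ord.
- by rewrite P1; apply: schur_ord.
- by rewrite P4; apply: schur_ord.
- by apply: schur_ord.
- exfalso; lra.
Qed.

Lemma X100_gen (R : rcfType) (Q1 Q2 Q3 : pt R) (sa sb sc C1 C2 r : R) :
  0 <= sa -> 0 <= sb -> 0 <= sc -> sa != sb -> sb != sc -> sc != sa ->
  sa^+2 = sqd Q2 Q3 -> sb^+2 = sqd Q3 Q1 -> sc^+2 = sqd Q1 Q2 ->
  let u1 := sa/(sb-sc) in let u2 := sb/(sc-sa) in let u3 := sc/(sa-sb) in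
  let X := from_bary Q1 Q2 Q3 u1 u2 u3 in
  (X.1 - C1)^+2 + (X.2 - C2)^+2 - r^+2 =
  (u1*((Q1.1-C1)^+2+(Q1.2-C2)^+2-r^+2) + u2*((Q2.1-C1)^+2+(Q2.2-C2)^+2-r^+2)
   + u3*((Q3.1-C1)^+2+(Q3.2-C2)^+2-r^+2)) / (u1+u2+u3).
Proof.
move=> a0 b0 c0 ab bc ca ha hb hc u1 u2 u3 X.
have ab' : sa - sb != 0 by rewrite subr_eq0.
have bc' : sb - sc != 0 by rewrite subr_eq0.
have ca' : sc - sa != 0 by rewrite subr_eq0.
have S0 : u1 + u2 + u3 != 0.
  have H : (u1+u2+u3) * ((sb-sc)*(sc-sa)*(sa-sb)) = - schurE sa sb sc.
    by rewrite /u1 /u2 /u3 /schurE; field; rewrite ab' bc' ca'.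
  have hs := schur3 a0 b0 c0 ab bc ca.
  apply/negP => /eqP S0; move: hs; rewrite -oppr_lt0 -{}H S0 mul0r; by rewrite ltxx.
have hsum : u2*u3*sqd Q2 Q3 + u3*u1*sqd Q3 Q1 + u1*u2*sqd Q1 Q2 = 0.
  rewrite -ha -hb -hc /u1 /u2 /u3. field. by rewrite ab' bc' ca'.
rewrite /X; clear X; clearbody u1 u2 u3.
have E : ((from_bary Q1 Q2 Q3 u1 u2 u3).1 - C1)^+2 + ((from_bary Q1 Q2 Q3 u1 u2 u3).2 - C2)^+2 - r^+2 -
  (u1*((Q1.1-C1)^+2+(Q1.2-C2)^+2-r^+2) + u2*((Q2.1-C1)^+2+(Q2.2-C2)^+2-r^+2)
   + u3*((Q3.1-C1)^+2+(Q3.2-C2)^+2-r^+2)) / (u1+u2+u3)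
  = - (u2*u3*sqd Q2 Q3 + u3*u1*sqd Q3 Q1 + u1*u2*sqd Q1 Q2) / (u1+u2+u3)^+2.
  rewrite /from_bary /sqd /=.
  by field.
by move/eqP: E; rewrite hsum oppr0 mul0r subr_eq0 => /eqP.
Qed.


Lemma gE_pos (R : rcfType) (a b : R) (P Q : pt R) :
  0 < a -> 0 < b -> P != Q -> 0 < gE a b P Q.
Proof.
case: P => p1 p2; case: Q => q1 q2 a0 b0; rewrite xpair_eqE negb_and /gE /= => h.
have A0 : 0 <= (p1-q1)^+2/a^+2 by apply: divr_ge0; apply: sqr_ge0.
have B0 : 0 <= (p2-q2)^+2/b^+2 by apply: divr_ge0; apply: sqr_ge0.
apply: divr_gt0; last by lra.
case/orP: h => h.
- have : 0 < (p1-q1)^+2/a^+2 by apply: divr_gt0; [rewrite lt_def sqr_ge0 andbT sqrf_eq0 subr_eq0 h | rewrite exprn_gt0].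
  lra.
- have : 0 < (p2-q2)^+2/b^+2 by apply: divr_gt0; [rewrite lt_def sqr_ge0 andbT sqrf_eq0 subr_eq0 h | rewrite exprn_gt0].
  lra.
Qed.

Lemma dist_sq (R : rcfType) (P Q : pt R) : dist P Q ^+2 = sqd P Q.
Proof.
rewrite /dist sqr_sqrtr /dot /psub /sqd //=.
by apply: addr_ge0; rewrite -expr2 sqr_ge0.
Qed.

Lemma dist_ge0 (R : rcfType) (P Q : pt R) : 0 <= dist P Q.
Proof. exact: sqrtr_ge0. Qed.

Lemma dist_sym (R : rcfType) (P Q : pt R) : dist P Q = dist Q P.
Proof. by rewrite /dist /dot /psub /=; congr Num.sqrt; ring. Qed.

Lemma dist_pos (R : rcfType) (P Q : pt R) : P != Q -> 0 < dist P Q.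
Proof.
move=> h; rewrite lt_def dist_ge0 andbT; apply/negP => /eqP d0.
move: (dist_sq P Q); rewrite d0 expr0n /= /sqd; clear d0; case: P h => p1 p2; case: Q => q1 q2.
rewrite xpair_eqE negb_and /= => h E.
have A0 := sqr_ge0 (p1-q1). have B0 := sqr_ge0 (p2-q2).
case/orP: h => h.
- have : 0 < (p1-q1)^+2 by rewrite lt_def sqr_ge0 andbT sqrf_eq0 subr_eq0 h.
  lra.
- have : 0 < (p2-q2)^+2 by rewrite lt_def sqr_ge0 andbT sqrf_eq0 subr_eq0 h.
  lra.
Qed.

Lemma bis (R : rcfType) (a b : R) (Q P S : pt R) :
  0 < a -> 0 < b -> on_ellipse a b Q -> on_ellipse a b P -> on_ellipse a b S ->
  Q != P -> S != P -> normal_bisects a b Q P S ->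
  gE a b Q P * dist S P = gE a b S P * dist Q P.
Proof.
move=> a0 b0 eQ eP eS hQ hS.
have LQ0 := dist_pos hQ. have LS0 := dist_pos hS.
have gQ := gE_pos a0 b0 hQ. have gS := gE_pos a0 b0 hS.
have hLQ := dist_sq Q P. have hLS := dist_sq S P.
rewrite /normal_bisects /cross /padd /pscale /psub /=.
move: eQ eP eS gQ gS hLQ hLS.
rewrite /on_ellipse /gE /sqd.
move: LQ0 LS0; move: (dist Q P) (dist S P) => LQ LS LQ0 LS0.
clear hQ hS.
case: Q => q1 q2; case: P => p1 p2; case: S => s1 s2 /=.
move=> eQ eP eS gQ gS hLQ hLS cr.
have a0' : a != 0 by rewrite gt_eqF. have b0' : b != 0 by rewrite gt_eqF.
have LQ' : LQ != 0 by rewrite gt_eqF. have LS' : LS != 0 by rewrite gt_eqF.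
set u1 := LQ^-1 * (q1 - p1). set u2 := LQ^-1 * (q2 - p2).
set w1 := LS^-1 * (s1 - p1). set w2 := LS^-1 * (s2 - p2).
set n1 := p1 / a^+2. set n2 := p2 / b^+2.
set gq := ((q1 - p1) ^+ 2 / a ^+ 2 + (q2 - p2) ^+ 2 / b ^+ 2) / 2.
set gs := ((s1 - p1) ^+ 2 / a ^+ 2 + (s2 - p2) ^+ 2 / b ^+ 2) / 2.
have nu : u1*n1 + u2*n2 = - (gq / LQ).
  have : u1*n1 + u2*n2 + gq/LQ = (q1^+2/a^+2 + q2^+2/b^+2 - (p1^+2/a^+2 + p2^+2/b^+2))/(2*LQ).
    by rewrite /u1 /u2 /n1 /n2 /gq; field; rewrite a0' b0' LQ'.
  by rewrite eQ eP subrr mul0r => /eqP; rewrite addr_eq0 => /eqP.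
have nw : w1*n1 + w2*n2 = - (gs / LS).
  have : w1*n1 + w2*n2 + gs/LS = (s1^+2/a^+2 + s2^+2/b^+2 - (p1^+2/a^+2 + p2^+2/b^+2))/(2*LS).
    by rewrite /w1 /w2 /n1 /n2 /gs; field; rewrite a0' b0' LS'.
  by rewrite eS eP subrr mul0r => /eqP; rewrite addr_eq0 => /eqP.
have uu : u1^+2 + u2^+2 = 1.
  have -> : u1^+2 + u2^+2 = ((q1 - p1)^+2 + (q2 - p2)^+2) / LQ^+2 by rewrite /u1 /u2; field.
  by rewrite -hLQ divff // expf_neq0.
have ww : w1^+2 + w2^+2 = 1.
  have -> : w1^+2 + w2^+2 = ((s1 - p1)^+2 + (s2 - p2)^+2) / LS^+2 by rewrite /w1 /w2; field.
  by rewrite -hLS divff // expf_neq0.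
have qs : gq / LQ > 0 by apply: divr_gt0.
have ss : gs / LS > 0 by apply: divr_gt0.
have D0 : (u1 - w1)*n1 + (u2 - w2)*n2 = 0.
  have H : ((u1 - w1)*n1 + (u2 - w2)*n2) * ((u1+w1)^+2 + (u2+w2)^+2) = 0.
    have -> : ((u1 - w1)*n1 + (u2 - w2)*n2) * ((u1+w1)^+2 + (u2+w2)^+2) =
      ((u1^+2 + u2^+2) - (w1^+2 + w2^+2)) * (n1*(u1+w1) + n2*(u2+w2))
      + ((u1+w1)*(u2-w2) - (u2+w2)*(u1-w1)) * ((u1 + w1) * n2 - (u2 + w2) * n1) by ring.
    by rewrite uu ww cr subrr !mul0r mulr0 addr0.
  move/eqP: H; rewrite mulf_eq0 => /orP[/eqP //|/eqP H].
  have /andP[s1' s2'] : ((u1+w1)^+2 == 0) && ((u2+w2)^+2 == 0).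
    by rewrite -paddr_eq0 ?sqr_ge0 // H.
  rewrite !sqrf_eq0 in s1' s2'; move/eqP: s1' => s1'; move/eqP: s2' => s2'.
  have : (u1+w1)*n1 + (u2+w2)*n2 = - (gq / LQ) - gs/LS by rewrite -nu -nw; ring.
  rewrite s1' s2' !mul0r addr0 => /esym /eqP; rewrite subr_eq0 => /eqP E.
  exfalso; lra.
have : u1*n1+u2*n2 - (w1*n1+w2*n2) = 0 by rewrite -D0; ring.
rewrite nu nw opprK addrC => /eqP; rewrite subr_eq0 => /eqP E.
have -> : gq = gs / LS * LQ by rewrite E divfK.
by rewrite mulrAC divfK.
Qed.


Lemma focal_facts (R : rcfType) (a b : R) : 0 < b -> b < a ->
  let c := focal_c a b in [/\ 0 < a, 0 < c, c < a & c^+2 = a^+2 - b^+2].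
Proof.
move=> b0 ba c.
have a0 : 0 < a by apply: lt_trans ba.
have ab : 0 < a^+2 - b^+2 by nra.
have hc : c^+2 = a^+2 - b^+2 by rewrite /c /focal_c sqr_sqrtr // ltW.
have c0 : 0 < c by rewrite /c /focal_c sqrtr_gt0.
split => //. nra.
Qed.

Lemma dd_pos (R : rcfType) (a b c : R) (P : pt R) :
  0 < b -> 0 < c -> c < a -> on_ellipse a b P -> 0 < dd a c P.
Proof.
case: P => x y b0 c0 ca; rewrite /on_ellipse /dd /= => e.
have a0 : 0 < a by apply: lt_trans ca.
have hx : x^+2 <= a^+2.
  have : x^+2/a^+2 <= 1 by rewrite -e lerDl divr_ge0 // sqr_ge0.
  by rewrite ler_pdivrMr ?exprn_gt0 // mul1r.
have hx' : -a <= x by nra.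
have h1 : 0 <= c*(x+a) by apply: mulr_ge0; lra.
have h2 : 0 < a*(a-c) by apply: mulr_gt0; lra.
have h3 : a^+2 + c*x = a*(a-c) + c*(x+a) by ring.
have : 0 < a^+2 + c*x by rewrite h3; lra.
move=> h; have -> : a + c*x/a = (a^+2 + c*x)/a by field; rewrite gt_eqF.
by apply: divr_gt0.
Qed.

Lemma dist_f1 (R : rcfType) (a b : R) (P : pt R) :
  0 < b -> b < a -> on_ellipse a b P -> dist P (focus1 a b) = dd a (focal_c a b) P.
Proof.
move=> b0 ba e.
have [a0 c0 ca hc] := focal_facts b0 ba.
have dp := dd_pos b0 c0 ca e.
rewrite /dist.
have -> : dot (psub P (focus1 a b)) (psub P (focus1 a b)) = (dd a (focal_c a b) P)^+2.
  clear dp; move: e hc; rewrite /on_ellipse /dot /psub /focus1 /dd; move: (focal_c a b) => c.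
  case: P => x y /= e hc.
  have : (x - -c)*(x - -c) + (y-0)*(y-0) - (a + c*x/a)^+2 =
    b^+2*(x^+2/a^+2+y^+2/b^+2 - 1) + (c^+2 - (a^+2-b^+2))*(1 - x^+2/a^+2).
    by field; rewrite !gt_eqF.
  rewrite e hc !subrr mulr0 mul0r addr0 => /eqP; rewrite subr_eq0 => /eqP //.
by rewrite sqrtr_sqr gtr0_norm.
Qed.

Lemma sqd_f1 (R : rcfType) (a b : R) (P : pt R) :
  0 < b -> b < a -> on_ellipse a b P ->
  (P.1 + focal_c a b)^+2 + P.2^+2 = (dd a (focal_c a b) P)^+2.
Proof.
move=> b0 ba e; rewrite -(dist_f1 b0 ba e) dist_sq /sqd /focus1 /=.
by rewrite opprK subr0.
Qed.

Lemma distQ (R : rcfType) (a b rho : R) (P P' : pt R) :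
  0 < b -> b < a -> on_ellipse a b P -> on_ellipse a b P' ->
  dist (focus_inv a b rho P) (focus_inv a b rho P') =
  rho^+2 * dist P P' / (dd a (focal_c a b) P * dd a (focal_c a b) P').
Proof.
move=> b0 ba e e'.
have [a0 c0 ca hc] := focal_facts b0 ba.
have dp := dd_pos b0 c0 ca e. have dp' := dd_pos b0 c0 ca e'.
have h1 := sqd_f1 b0 ba e. have h2 := sqd_f1 b0 ba e'.
rewrite /focus_inv (dist_f1 b0 ba e) (dist_f1 b0 ba e') {1}/dist.
move: dp dp' h1 h2; rewrite /dist /focus1.
move: (focal_c a b) => c.
move: (dd a c P) (dd a c P') => D1 D2 dp dp' h1 h2.
have D1' : D1 != 0 by rewrite gt_eqF. have D2' : D2 != 0 by rewrite gt_eqF.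
have E : dot (psub (padd (- c, 0) (pscale ((rho / D1) ^+ 2) (psub P (- c, 0))))
       (padd (- c, 0) (pscale ((rho / D2) ^+ 2) (psub P' (- c, 0)))))
       (psub (padd (- c, 0) (pscale ((rho / D1) ^+ 2) (psub P (- c, 0))))
       (padd (- c, 0) (pscale ((rho / D2) ^+ 2) (psub P' (- c, 0)))))
   = (rho^+2/(D1*D2))^+2 * dot (psub P P') (psub P P').
  set k1 := (rho / D1) ^+ 2. set k2 := (rho / D2) ^+ 2.
  have : dot (psub (padd (- c, 0) (pscale k1 (psub P (- c, 0))))
       (padd (- c, 0) (pscale k2 (psub P' (- c, 0)))))
       (psub (padd (- c, 0) (pscale k1 (psub P (- c, 0))))
       (padd (- c, 0) (pscale k2 (psub P' (- c, 0)))))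
     - (rho^+2/(D1*D2))^+2 * dot (psub P P') (psub P P')
     = (k1^+2 - k1*k2)*((P.1 + c)^+2 + P.2^+2 - D1^+2) + (k2^+2 - k1*k2)*((P'.1 + c)^+2 + P'.2^+2 - D2^+2).
    rewrite /k1 /k2 /dot /psub /padd /pscale /=. by field; rewrite D1' D2'.
  by rewrite h1 h2 !subrr !mulr0 addr0 => /eqP; rewrite subr_eq0 => /eqP.
rewrite E sqrtrM ?sqr_ge0 // sqrtr_sqr ger0_norm; last first.
  by apply: divr_ge0; [apply: sqr_ge0 | apply: mulr_ge0; apply: ltW].
by rewrite mulrAC.
Qed.

Lemma QC (R : rcfType) (a b rho : R) (P : pt R) :
  0 < b -> b < a -> on_ellipse a b P ->
  let Q := focus_inv a b rho P in let c := focal_c a b in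
  (Q.1 - (- c * (1 + rho ^+ 2 / b ^+ 2)))^+2 + (Q.2 - 0)^+2 - (rho ^+ 2 * a / b ^+ 2)^+2
  = rho^+4 * c^+2 * P.2^+2 / (b^+4 * (dd a c P)^+2).
Proof.
move=> b0 ba e /=.
have [a0 c0 ca hc] := focal_facts b0 ba.
have dp := dd_pos b0 c0 ca e.
have h1 := sqd_f1 b0 ba e.
rewrite /focus_inv (dist_f1 b0 ba e) /focus1.
move: e hc dp h1; rewrite /on_ellipse /dd; move: (focal_c a b) => c.
case: P => x y /= e hc dp h1.
have D' : a + c*x/a != 0 by rewrite gt_eqF.
have a0' : a != 0 by rewrite gt_eqF. have b0' : b != 0 by rewrite gt_eqF.
set D := a + c*x/a.
have : (- c + (rho / D) ^+ 2 * (x - - c) - - c * (1 + rho ^+ 2 / b ^+ 2)) ^+ 2 +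
    (0 + (rho / D) ^+ 2 * (y - 0) - 0) ^+ 2 - (rho ^+ 2 * a / b ^+ 2) ^+ 2
    - rho^+4 * c^+2 * y^+2 / (b^+4 * D^+2)
  = rho^+4/D^+4 * ((x+c)^+2 + y^+2 - D^+2)
    + rho^+4/(b^+4*D^+2) * ((c^+2 - a^+2 + b^+2)*(D^+2 + b^+2) - b^+2*c^+2*(x^+2/a^+2 + y^+2/b^+2 - 1)).
  have D'' : a*a + c*x != 0.
    have -> : a*a+c*x = a*(a + c*x/a) by field.
    by rewrite mulf_neq0.
  rewrite /D. by field; rewrite D'' a0' b0'.
have hc' : c^+2 - a^+2 + b^+2 = 0 by rewrite hc; ring.
move=> H; apply/eqP; rewrite -subr_eq0 H.
by rewrite h1 e hc' !subrr; apply/eqP; ring.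
Qed.


Lemma xa_eq (R : rcfType) (a b : R) (P Q : pt R) :
  0 < a -> 0 < b -> on_ellipse a b P -> on_ellipse a b Q -> P.1 = -a -> Q.1 = -a -> P = Q.
Proof.
move=> a0 b0; case: P => x y; case: Q => x' y'; rewrite /on_ellipse /= => e e' hx hx'; rewrite hx in e; rewrite hx' in e'.
have y0 : forall z : R, (-a)^+2/a^+2 + z^+2/b^+2 = 1 -> z = 0.
  move=> z ez.
  have : z^+2 = b^+2*((-a)^+2/a^+2 + z^+2/b^+2 - (-a)^+2/a^+2).
    by field; rewrite (gt_eqF a0) (gt_eqF b0).
  rewrite ez sqrrN divff ?expf_neq0 ?gt_eqF // subrr mulr0 => /eqP.
  by rewrite expf_eq0 /= => /eqP.
by rewrite hx hx' (y0 _ e) (y0 _ e').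
Qed.

Lemma Bexpr_cyc (R : rcfType) (a b c : R) (P1 P2 P3 : pt R) :
  Bexpr a b c P1 P2 P3 = Bexpr a b c P2 P3 P1.
Proof. rewrite /Bexpr; ring. Qed.

Unset Implicit Arguments.
Theorem mainTheorem16 (R : rcfType) (a b rho : R) (P1 P2 P3 : pt R) :
  0 < b -> b < a -> 0 < rho ->
  three_periodic a b P1 P2 P3 ->
  let Q1 := focus_inv a b rho P1 in
  let Q2 := focus_inv a b rho P2 in
  let Q3 := focus_inv a b rho P3 in
  sideA Q1 Q2 Q3 != sideB Q1 Q2 Q3 ->
  sideB Q1 Q2 Q3 != sideC Q1 Q2 Q3 ->
  sideC Q1 Q2 Q3 != sideA Q1 Q2 Q3 ->
  let X := X100 Q1 Q2 Q3 in
  let c := focal_c a b in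
  (X.1 - (- c * (1 + rho ^+ 2 / b ^+ 2))) ^+ 2 + X.2 ^+ 2
    = (rho ^+ 2 * a / b ^+ 2) ^+ 2.
Proof.
move=> b0 ba r0 [e1 e2 e3 [n12 n23 n31] [v1 v2 v3]] Q1 Q2 Q3 sAB sBC sCA X c.
have [a0 c0 ca hc] := focal_facts b0 ba.
move/eqP: n12 => n12. move/eqP: n23 => n23. move/eqP: n31 => n31.
have n21 : P2 != P1 by rewrite eq_sym. have n32 : P3 != P2 by rewrite eq_sym.
have n13 : P1 != P3 by rewrite eq_sym.
have B1 := bis a0 b0 e3 e1 e2 n31 n21 v1.
have B2 := bis a0 b0 e1 e2 e3 n12 n32 v2.
rewrite (dist_sym P2 P1) (gE_sym a b P2 P1) in B1.
rewrite (dist_sym P3 P2) (gE_sym a b P3 P2) in B2.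
set G1 := gE a b P2 P3 in B1 B2. set G2 := gE a b P3 P1 in B1 B2. set G3 := gE a b P1 P2 in B1 B2.
set L1 := dist P2 P3 in B1 B2. set L2 := dist P3 P1 in B1 B2. set L3 := dist P1 P2 in B1 B2.
have G1p : 0 < G1 := gE_pos a0 b0 n23. have G2p : 0 < G2 := gE_pos a0 b0 n31.
have G3p : 0 < G3 := gE_pos a0 b0 n12.
have L1p : 0 < L1 := dist_pos n23. have L2p : 0 < L2 := dist_pos n31.
have L3p : 0 < L3 := dist_pos n12.
set J := G3 / L3.
have Jp : 0 < J by apply: divr_gt0.
have hL1 : L1 = G1 / J.
  rewrite /J; apply: (@mulIf _ G3); first by rewrite gt_eqF.
  by rewrite mulrC B2 /J; field; rewrite !gt_eqF.
have hL2 : L2 = G2 / J.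
  rewrite /J; apply: (@mulIf _ G3); first by rewrite gt_eqF.
  by rewrite mulrC -B1 /J; field; rewrite !gt_eqF.
have hL3 : L3 = G3 / J by rewrite /J; field; rewrite !gt_eqF.
have K0 : 0 < J^+2 by rewrite exprn_gt0.
have k1 : G1^+2 = J^+2 * sqd P2 P3 by rewrite -dist_sq -/L1 hL1; field; rewrite gt_eqF.
have k2 : G2^+2 = J^+2 * sqd P3 P1 by rewrite -dist_sq -/L2 hL2; field; rewrite gt_eqF.
have k3 : G3^+2 = J^+2 * sqd P1 P2 by rewrite -dist_sq -/L3 hL3; field; rewrite gt_eqF.
have Bz : Bexpr a b c P1 P2 P3 = 0.
  have G1n : G1 != 0 by rewrite gt_eqF. have G2n : G2 != 0 by rewrite gt_eqF.
  have G3n : G3 != 0 by rewrite gt_eqF.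
  case: (eqVneq P2.1 (-a)) => h2.
    have h3 : P3.1 != -a by apply/negP => /eqP h3; move/eqP: n23; apply; exact: xa_eq e2 e3 h2 h3.
    have h1 : P1.1 != -a by apply/negP => /eqP h1; move/eqP: n12; apply; exact: xa_eq e1 e2 h1 h2.
    rewrite Bexpr_cyc.
    by apply: (Bzero b0 c0 ca hc K0 e2 e3 e1 n31 h3 h1 G2n G3n G1n k2 k3 k1).
  case: (eqVneq P3.1 (-a)) => h3.
    have h1 : P1.1 != -a by apply/negP => /eqP h1; move/eqP: n31; apply; exact: xa_eq e3 e1 h3 h1.
    rewrite Bexpr_cyc Bexpr_cyc.
    by apply: (Bzero b0 c0 ca hc K0 e3 e1 e2 n12 h1 h2 G3n G1n G2n k3 k1 k2).
  by apply: (Bzero b0 c0 ca hc K0 e1 e2 e3 n23 h2 h3 G1n G2n G3n k1 k2 k3).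
set d1 := dd a c P1. set d2 := dd a c P2. set d3 := dd a c P3.
have d1p : 0 < d1 := dd_pos b0 c0 ca e1. have d2p : 0 < d2 := dd_pos b0 c0 ca e2.
have d3p : 0 < d3 := dd_pos b0 c0 ca e3.
pose kap := rho^+2 / (J*d1*d2*d3).
have kp : 0 < kap by apply: divr_gt0; [rewrite exprn_gt0 | do 3 (apply: mulr_gt0 => //)].
pose m1 := G1*d1. pose m2 := G2*d2. pose m3 := G3*d3.
have hsa : sideA Q1 Q2 Q3 = kap * m1.
  rewrite /sideA /Q2 /Q3 (distQ rho b0 ba e2 e3) -/L1 hL1 /kap /m1 -/c -/d2 -/d3.
  by field; rewrite !gt_eqF.
have hsb : sideB Q1 Q2 Q3 = kap * m2.
  rewrite /sideB /Q3 /Q1 (distQ rho b0 ba e3 e1) -/L2 hL2 /kap /m2 -/c -/d3 -/d1.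
  by field; rewrite !gt_eqF.
have hsc : sideC Q1 Q2 Q3 = kap * m3.
  rewrite /sideC /Q1 /Q2 (distQ rho b0 ba e1 e2) -/L3 hL3 /kap /m3 -/c -/d1 -/d2.
  by field; rewrite !gt_eqF.
have m12 : m1 - m2 != 0.
  by apply: contraNneq sAB; rewrite hsa hsb => /eqP; rewrite subr_eq0 => /eqP ->.
have m23 : m2 - m3 != 0.
  by apply: contraNneq sBC; rewrite hsb hsc => /eqP; rewrite subr_eq0 => /eqP ->.
have m31 : m3 - m1 != 0.
  by apply: contraNneq sCA; rewrite hsc hsa => /eqP; rewrite subr_eq0 => /eqP ->.
pose C1 := - c * (1 + rho^+2/b^+2). pose r := rho^+2*a/b^+2.
pose sa := sideA Q1 Q2 Q3. pose sb := sideB Q1 Q2 Q3. pose sc := sideC Q1 Q2 Q3.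
pose u1 := sa/(sb-sc). pose u2 := sb/(sc-sa). pose u3 := sc/(sa-sb).
pose T1 := (Q1.1 - C1)^+2 + (Q1.2 - 0)^+2 - r^+2.
pose T2 := (Q2.1 - C1)^+2 + (Q2.2 - 0)^+2 - r^+2.
pose T3 := (Q3.1 - C1)^+2 + (Q3.2 - 0)^+2 - r^+2.
have H : (X.1 - C1)^+2 + (X.2 - 0)^+2 - r^+2 = (u1*T1 + u2*T2 + u3*T3)/(u1+u2+u3).
  exact (@X100_gen R Q1 Q2 Q3 sa sb sc C1 0 r (dist_ge0 Q2 Q3) (dist_ge0 Q3 Q1) (dist_ge0 Q1 Q2)
           sAB sBC sCA (dist_sq Q2 Q3) (dist_sq Q3 Q1) (dist_sq Q1 Q2)).
have hT1 : T1 = rho^+4 * c^+2 * P1.2^+2 / (b^+4 * d1^+2) by exact (QC rho b0 ba e1).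
have hT2 : T2 = rho^+4 * c^+2 * P2.2^+2 / (b^+4 * d2^+2) by exact (QC rho b0 ba e2).
have hT3 : T3 = rho^+4 * c^+2 * P3.2^+2 / (b^+4 * d3^+2) by exact (QC rho b0 ba e3).
have Num : u1*T1 + u2*T2 + u3*T3 = 0.
  rewrite hT1 hT2 hT3 /u1 /u2 /u3 /sa /sb /sc hsa hsb hsc.
  have -> : kap * m1 / (kap * m2 - kap * m3) * (rho ^+ 4 * c ^+ 2 * P1.2 ^+ 2 / (b ^+ 4 * d1 ^+ 2)) +
    kap * m2 / (kap * m3 - kap * m1) * (rho ^+ 4 * c ^+ 2 * P2.2 ^+ 2 / (b ^+ 4 * d2 ^+ 2)) +
    kap * m3 / (kap * m1 - kap * m2) * (rho ^+ 4 * c ^+ 2 * P3.2 ^+ 2 / (b ^+ 4 * d3 ^+ 2))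
    = rho^+4 * c^+2 / b^+4 * Bexpr a b c P1 P2 P3 / (d1*d2*d3*((m2-m3)*(m3-m1)*(m1-m2))).
    rewrite /Bexpr -/G1 -/G2 -/G3 -/d1 -/d2 -/d3 -/m1 -/m2 -/m3.
    have k0 : kap != 0 by rewrite gt_eqF.
    have km23 : kap * m2 - kap * m3 != 0 by rewrite -mulrBr mulf_neq0.
    have km31 : kap * m3 - kap * m1 != 0 by rewrite -mulrBr mulf_neq0.
    have km12 : kap * m1 - kap * m2 != 0 by rewrite -mulrBr mulf_neq0.
    rewrite /m1 /m2 /m3 in m12 m23 m31 km23 km31 km12 *.
    by field; rewrite m12 m23 m31 km12 km23 km31 !gt_eqF.
  by rewrite Bz mulr0 mul0r.
move: H; rewrite Num mul0r subr0 => /eqP; rewrite subr_eq0 => /eqP.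
done.
Qed.
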